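(* Let $\gamma=(x,y)\in\mathcal{C}$ with $|\gamma'|\equiv1$, let $u\in\mathcal{P}$ have finitely many interfaces, let $s\in S_u$, and let $J\Subset\{y>0\}$ be an open interval with $\overline J\cap S_u=\{s\}$. Then for every sufficiently small $\varepsilon>0$ there is $u_\varepsilon\in W^{1,2}(J)$ with $\{u_\varepsilon\neq u\}\Subset J$, $\|u_\varepsilon\|_\infty\le C_0$, $\int_{M_\gamma(J)}u_\varepsilon\,d\mu=\int_{M_\gamma(J)}u\,d\mu$, such that $u_\varepsilon\to u$ in $L^1(J)$ as $\varepsilon\to0$ and $$\limsup_{\varepsilon\to0}\int_{M_\gamma(J)}\Big(\varepsilon|\nabla_{M_\gamma}u_\varepsilon|^2+\frac1\varepsilon W(u_\varepsilon)\Big)d\mu\le 2\pi\sigma\,y(s).$$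
   Context: Let $I\subset\mathbb{R}$ be a bounded open interval. For a Lipschitz curve $\gamma=(x,y)\colon I\to\mathbb{R}^2$ with $y\ge0$ (extended continuously to $\overline I$), $M_\gamma$ is the surface obtained by rotating $\gamma$ about the $x$-axis, area measure $d\mu=|\gamma'|\,y\,dt\,d\theta$; $M_\gamma(J)$ is the part generated by $\gamma(J)$, $\mathcal{A}_\gamma=2\pi\int_I|\gamma'|y\,dt$; for $\theta$-independent $f$, $\int_{M_\gamma(J)}f\,d\mu=2\pi\int_J f|\gamma'|y\,dt$; for a function $u$ of $t$ only, $|\nabla_{M_\gamma}u|=|u'|/|\gamma'|$. Where $\gamma$ is twice weakly differentiable, $\gamma'\ne0$, $y>0$: $\kappa_1=(x''y'-y''x')/|\gamma'|^3$, $\kappa_2=x'/(y|\gamma'|)$, $|B|^2=\kappa_1^2+\kappa_2^2$. $\{y>0\}=\{t\in I:y(t)>0\}$. Fix $A_0>0$, $m\in\mathbb{R}$, $C_0>1$. $W\colon\mathbb{R}\to[0,\infty)$ is continuous, vanishes exactly at $\pm1$, and is $C^2$ near $\pm1$; $\sigma=2\int_{-1}^1\sqrt{W(s)}\,ds$. $\mathcal{C}$ is the set of $\gamma=(x,y)\in C^{0,1}(I;\mathbb{R}^2)$ with $\gamma\in W^{2,1}_{loc}(\{y>0\};\mathbb{R}^2)$, $|\gamma'|$ a.e. equal to a positive constant, $y\ge0$, $y(\partial I)=\{0\}$, $\{y=0\}$ finite, $\int_{M_\gamma(\{y>0\})}|B|^2d\mu<\infty$, $\mathcal{A}_\gamma=A_0$.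 For $\gamma\in\mathcal{C}$, $\mathcal{P}$ is the set of $u\colon I\to\{\pm1\}$ for which there is a set $S_u\subset\{y>0\}$ (the jump set, taken minimal; its points are called interfaces) with $S_u\cap J$ finite for every $J\Subset\{y>0\}$, $u$ constant on each connected component of $\{y>0\}\setminus S_u$, $\int_{M_\gamma}u\,d\mu=mA_0$, and $2\pi\sum_{s\in S_u}y(s)<\infty$. *)

(* Defs.v *)
(* Lebesgue integrals on bounded intervals are
   expressed elementarily through the Henstock--Kurzweil (gauge) integral:
   f is Lebesgue integrable on [a,b] iff f and |f| are HK-integrable, and then
   the two integrals coincide. *)
From Stdlib Require Import Reals Lra List.
Open Scope R_scope.

(* Tagged partitions of [a,b]: lists of (left, tag, right). *)
Fixpoint is_partition (a b : R) (P : list (R * R * R)) : Prop :=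
  match P with
  | nil => a = b
  | (l, t, r) :: P' => l = a /\ l < r /\ l <= t /\ t <= r /\ is_partition r b P'
  end.

Fixpoint fine (g : R -> R) (P : list (R * R * R)) : Prop :=
  match P with
  | nil => True
  | (l, t, r) :: P' => t - g t < l /\ r < t + g t /\ fine g P'
  end.

Fixpoint rsum (f : R -> R) (P : list (R * R * R)) : R :=
  match P with
  | nil => 0
  | (l, t, r) :: P' => f t * (r - l) + rsum f P'
  end.

Definition HK_integral (f : R -> R) (a b I : R) : Prop :=
  a <= b /\
  forall eps, 0 < eps -> exists g : R -> R, (forall t, 0 < g t) /\
    forall P, is_partition a b P -> fine g P -> Rabs (rsum f P - I) < eps.

Definition Lint (f : R -> R) (a b I : R) : Prop :=
  HK_integral f a b I /\ exists J, HK_integral (fun t => Rabs (f t)) a b J.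

Definition null_set (N : R -> Prop) : Prop :=
  forall eps, 0 < eps -> exists l r : nat -> R,
    (forall n, l n <= r n) /\
    (forall t, N t -> exists n, l n < t < r n) /\
    (forall n, sum_f_R0 (fun k => r k - l k) n < eps).

Definition ae_on (a b : R) (P : R -> Prop) : Prop :=
  exists N, null_set N /\ forall t, a < t < b -> ~ N t -> P t.

(* Sobolev space W^{1,2}((c,d)): v (continuous representative) is absolutely
   continuous with weak derivative g, and v, g are in L^2((c,d)). *)
Definition W12 (c d : R) (v g : R -> R) : Prop :=
  (exists I, Lint v c d I) /\ (exists I, Lint (fun t => v t ^ 2) c d I) /\
  (exists I, Lint g c d I) /\ (exists I, Lint (fun t => g t ^ 2) c d I) /\
  forall t1 t2, c < t1 -> t1 <= t2 -> t2 < d -> HK_integral g t1 t2 (v t2 - v t1).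

Definition W_ok (W : R -> R) : Prop :=
  continuity W /\ (forall r, 0 <= W r) /\
  (forall r, W r = 0 <-> (r = 1 \/ r = -1)) /\
  (forall z, (z = 1 \/ z = -1) ->
     exists del, 0 < del /\ exists W1 W2 : R -> R,
       forall r, Rabs (r - z) < del ->
         derivable_pt_lim W r (W1 r) /\ derivable_pt_lim W1 r (W2 r) /\
         continuity_pt W2 r).

(* The class C, for the curve gamma = (x,y) on I = (a0,b0), with
   |gamma'| a.e. equal to the positive constant sp. *)
Definition in_C (A0 a0 b0 : R) (x y : R -> R) (sp : R) : Prop :=
  (exists L, forall t1 t2, a0 <= t1 <= b0 -> a0 <= t2 <= b0 ->
      sqrt ((x t1 - x t2) ^ 2 + (y t1 - y t2) ^ 2) <= L * Rabs (t1 - t2)) /\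
  0 < sp /\
  ae_on a0 b0 (fun t => exists dx dy, derivable_pt_lim x t dx /\
      derivable_pt_lim y t dy /\ sqrt (dx ^ 2 + dy ^ 2) = sp) /\
  (forall t, a0 <= t <= b0 -> 0 <= y t) /\ y a0 = 0 /\ y b0 = 0 /\
  (exists Z : list R, forall t, a0 < t < b0 -> y t = 0 -> In t Z) /\
  (* W^{2,1}_loc({y>0}) with representatives (x1,y1) of gamma' and (x2,y2) of
     gamma'', and finite Willmore-type energy int |B|^2 dmu *)
  (exists x1 y1 x2 y2 : R -> R,
     (forall c d, a0 < c -> c <= d -> d < b0 -> (forall t, c <= t <= d -> 0 < y t) ->
        (exists I, Lint x2 c d I) /\ (exists I, Lint y2 c d I) /\
        forall t, c <= t <= d ->
          HK_integral x1 c t (x t - x c) /\ HK_integral y1 c t (y t - y c) /\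
          HK_integral x2 c t (x1 t - x1 c) /\ HK_integral y2 c t (y1 t - y1 c)) /\
     (exists K, forall c d, a0 < c -> c <= d -> d < b0 ->
        (forall t, c <= t <= d -> 0 < y t) ->
        exists I, HK_integral (fun t =>
            let s := sqrt (x1 t ^ 2 + y1 t ^ 2) in
            let k1 := (x2 t * y1 t - y2 t * x1 t) / s ^ 3 in
            let k2 := x1 t / (y t * s) in
            2 * PI * (k1 ^ 2 + k2 ^ 2) * s * y t) c d I /\ I <= K)) /\
  (exists I, Lint y a0 b0 I /\ 2 * PI * sp * I = A0).

Definition jump_set (a0 b0 : R) (y u : R -> R) (s : R) : Prop :=
  a0 < s < b0 /\ 0 < y s /\
  forall del, 0 < del -> exists t1 t2, a0 < t1 < b0 /\ a0 < t2 < b0 /\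
    Rabs (t1 - s) < del /\ Rabs (t2 - s) < del /\ u t1 <> u t2.

Fixpoint sum_list (f : R -> R) (l : list R) : R :=
  match l with nil => 0 | t :: l' => f t + sum_list f l' end.

Definition in_P (A0 m a0 b0 : R) (y : R -> R) (sp : R) (u : R -> R) : Prop :=
  (forall t, a0 < t < b0 -> u t = 1 \/ u t = -1) /\
  (forall c d, a0 < c -> d < b0 -> (forall t, c <= t <= d -> 0 < y t) ->
     exists L : list R, forall t, c <= t <= d -> jump_set a0 b0 y u t -> In t L) /\
  (forall t1 t2, a0 < t1 -> t1 <= t2 -> t2 < b0 ->
     (forall t, t1 <= t <= t2 -> 0 < y t /\ ~ jump_set a0 b0 y u t) -> u t1 = u t2) /\
  (exists I, Lint (fun t => u t * y t) a0 b0 I /\ 2 * PI * sp * I = m * A0) /\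
  (exists K, forall L : list R, NoDup L -> (forall t, In t L -> jump_set a0 b0 y u t) ->
     2 * PI * sum_list y L <= K).

(* Main.v *)
Require Import Defs.
From Stdlib Require Import Reals Lra Lia List ClassicalEpsilon.
From Coquelicot Require Import Coquelicot.
Open Scope R_scope.

Fixpoint toSF (a : R) (P : list (R*R*R)) : @SF_seq R :=
  match P with
  | nil => SF_nil a
  | (l,t,r) :: P' => SF_cons (l,t) (toSF r P')
  end.

Lemma part_le : forall P a b, is_partition a b P -> a <= b.
Proof.
  induction P as [|[[l t] r] P IH]; simpl; intros a b H.
  - lra.
  - destruct H as (-> & H1 & H2 & H3 & H4). apply IH in H4. lra.
Qed.

Lemma toSF_h : forall P a b, is_partition a b P -> SF_h (toSF a P) = a.
Proof. destruct P as [|[[l t] r] P]; simpl; intros a b H; [reflexivity| destruct H; auto]. Qed.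

Lemma toSF_last : forall P a b, is_partition a b P -> seq.last (SF_h (toSF a P)) (SF_lx (toSF a P)) = b.
Proof.
  induction P as [|[[l t] r] P IH]; simpl; intros a b H.
  - exact H.
  - destruct H as (-> & H1 & H2 & H3 & H4).
    exact (IH r b H4).
Qed.

Lemma toSF_sum : forall f P a b, is_partition a b P -> Riemann_sum f (toSF a P) = rsum f P.
Proof.
  induction P as [|[[l t] r] P IH]; simpl; intros a b H.
  - reflexivity.
  - destruct H as (-> & H1 & H2 & H3 & H4).
    rewrite Riemann_sum_cons. rewrite (IH r b H4). simpl. rewrite (toSF_h P r b H4).
    unfold plus, scal; simpl. unfold mult; simpl. ring.
Qed.

Lemma toSF_ptd : forall P a b, is_partition a b P -> pointed_subdiv (toSF a P).
Proof.
  induction P as [|[[l t] r] P IH]; simpl; intros a b H.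
  - intros i Hi. simpl in Hi. unfold SF_size in Hi. simpl in Hi. lia.
  - destruct H as (-> & H1 & H2 & H3 & H4).
    intros i Hi. rewrite SF_lx_cons, SF_ly_cons. destruct i as [|i].
    + simpl. rewrite (toSF_h P r b H4). lra.
    + simpl. apply (IH r b H4). rewrite SF_size_cons in Hi. lia.
Qed.

Lemma toSF_step : forall P a b d, is_partition a b P -> 0 < d ->
  (forall l t r, In (l,t,r) P -> r - l < d) -> seq_step (SF_lx (toSF a P)) < d.
Proof.
  induction P as [|[[l t] r] P IH]; simpl; intros a b d H Hd Hf.
  - unfold seq_step; simpl. lra.
  - destruct H as (-> & H1 & H2 & H3 & H4).
    rewrite SF_lx_cons. unfold seq_step. simpl.
    assert (Hs := IH r b d H4 Hd (fun l0 t0 r0 Hin => Hf l0 t0 r0 (or_intror Hin))).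
    unfold seq_step, SF_lx in Hs. simpl in Hs. rewrite (toSF_h P r b H4) in Hs |- *.
    apply Rmax_lub_lt; [|exact Hs].
    assert (r - a < d) by (apply (Hf a t r); auto). rewrite Rabs_right; lra.
Qed.

Lemma fine_in : forall g P l t r, fine g P -> In (l,t,r) P -> t - g t < l /\ r < t + g t.
Proof.
  induction P as [|[[l0 t0] r0] P IH]; simpl; intros l t r H Hin; [contradiction|].
  destruct H as (H1 & H2 & H3). destruct Hin as [E|E].
  - injection E; intros; subst; auto.
  - eauto.
Qed.

Lemma RInt_HK : forall f a b I, a <= b -> is_RInt f a b I -> HK_integral f a b I.
Proof.
  intros f a b I Hab HI. split; [exact Hab|]. intros eps Heps.
  destruct (Req_dec a b) as [E|Nab].
  - subst b. exists (fun _ => 1). split; [intros; lra|].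
    assert (I = 0).
    { rewrite <- (is_RInt_unique _ _ _ _ HI). exact (RInt_point (V:=R_CompleteNormedModule) a f). }
    intros P HP _. destruct P as [|[[l t] r] P]; simpl in *.
    + rewrite H. replace (0 - 0) with 0 by ring. rewrite Rabs_R0. lra.
    + destruct HP as (-> & H1 & H2 & H3 & H4). apply part_le in H4. lra.
  - unfold is_RInt in HI. specialize (HI _ (locally_ball I (mkposreal eps Heps))).
    destruct HI as [[d Hd] HP].
    exists (fun _ => d / 2). split; [intros; simpl; lra|].
    intros P Hpart Hfine.
    assert (Hst : seq_step (SF_lx (toSF a P)) < d).
    { apply (toSF_step P a b d Hpart Hd). intros l t r Hin.
      destruct (fine_in _ _ _ _ _ Hfine Hin). lra. }
    specialize (HP (toSF a P) Hst).
    assert (Hc : pointed_subdiv (toSF a P) /\ SF_h (toSF a P) = Rmin a b /\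
            seq.last (SF_h (toSF a P)) (SF_lx (toSF a P)) = Rmax a b).
    { rewrite Rmin_left, Rmax_right by lra. split; [eapply toSF_ptd; eauto|].
      split; [eapply toSF_h; eauto| eapply toSF_last; eauto]. }
    specialize (HP Hc).
    rewrite <- (toSF_sum f P a b Hpart).
    rewrite sign_eq_1 in HP by lra.
    unfold ball in HP; simpl in HP; unfold AbsRing_ball, abs, minus, plus, opp in HP; simpl in HP.
    unfold scal in HP; simpl in HP; unfold mult in HP; simpl in HP. unfold Rminus. rewrite Rmult_1_l in HP. exact HP.
Qed.

Lemma Lint_of : forall f a b, a <= b -> ex_RInt f a b -> Lint f a b (RInt f a b).
Proof.
  intros f a b Hab Hex. split.
  - apply RInt_HK; auto. apply (RInt_correct (V:=R_CompleteNormedModule)); auto.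
  - exists (RInt (fun t => Rabs (f t)) a b). apply RInt_HK; auto.
    apply (RInt_correct (V:=R_CompleteNormedModule)). apply (ex_RInt_norm f a b Hex).
Qed.

Lemma part_app : forall P a x t r, is_partition a x P -> x < r -> x <= t <= r ->
  is_partition a r (P ++ (x,t,r) :: nil).
Proof.
  induction P as [|[[l t0] r0] P IH]; simpl; intros a x t r H H1 H2.
  - subst. repeat split; try lra.
  - destruct H as (-> & A1 & A2 & A3 & A4). repeat split; auto.
Qed.

Lemma fine_app : forall g P x t r, fine g P -> t - g t < x -> r < t + g t ->
  fine g (P ++ (x,t,r) :: nil).
Proof.
  induction P as [|[[l t0] r0] P IH]; simpl; intros x t r H H1 H2.
  - auto.
  - destruct H as (A1 & A2 & A3). repeat split; auto.
Qed.

Lemma cousin : forall g a b, (forall t, 0 < g t) -> a <= b ->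
  exists P, is_partition a b P /\ fine g P.
Proof.
  intros g a b Hg Hab.
  set (E := fun x => a <= x <= b /\ exists P, is_partition a x P /\ fine g P).
  assert (Hb : bound E) by (exists b; intros x [Hx _]; lra).
  assert (Ha : exists x, E x) by (exists a; split; [lra| exists nil; simpl; auto]).
  destruct (completeness E Hb Ha) as [m [Hub Hlub]].
  assert (Ham : a <= m) by (apply Hub; destruct Ha as [x Hx]; unfold E; split; [lra| exists nil; simpl; auto]).
  assert (Hmb : m <= b) by (apply Hlub; intros x [Hx _]; lra).
  assert (Hx : exists x, E x /\ m - g m < x).
  { apply Classical_Prop.NNPP; intro Hn.
    assert (m <= m - g m). { apply Hlub. intros x Ex. apply Rnot_lt_le. intro Hl. apply Hn. eauto. }
    specialize (Hg m). lra. }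
  destruct Hx as [x [[Hxr [P [HP HF]]] Hxm]].
  assert (Hxm' : x <= m) by (apply Hub; split; eauto).
  destruct (Req_dec x b) as [Exb|Nxb]; [subst x; eauto|].
  set (r := Rmin b (m + g m / 2)).
  assert (Hr1 : x < r) by (unfold r; apply Rmin_glb_lt; specialize (Hg m); lra).
  assert (Hr2 : m <= r) by (unfold r; apply Rmin_glb; specialize (Hg m); lra).
  assert (Hr3 : r < m + g m) by (unfold r; specialize (Hg m); apply Rle_lt_trans with (m + g m / 2); [apply Rmin_r| lra]).
  assert (Er : E r).
  { split. { split; [lra| unfold r; apply Rmin_l]. }
    exists (P ++ (x,m,r) :: nil). split; [apply part_app; auto; lra| apply fine_app; auto]. }
  assert (r <= m) by (apply Hub; auto).
  destruct (Rle_dec b (m + g m / 2)) as [Hle|Hlt].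
  - assert (r = b) by (unfold r; apply Rmin_left; auto). subst r. rewrite H0 in Er. destruct Er as [_ HH]; auto.
  - assert (r = m + g m / 2) by (unfold r; apply Rmin_right; lra). specialize (Hg m). lra.
Qed.

Lemma fine_mono : forall g g' P, (forall t, g t <= g' t) -> fine g P -> fine g' P.
Proof.
  induction P as [|[[l t0] r0] P IH]; simpl; intros Hle H; auto.
  destruct H as (A1 & A2 & A3). pose proof (Hle t0). repeat split; try lra. apply IH; auto.
Qed.

Lemma HK_unique : forall f a b I1 I2, HK_integral f a b I1 -> HK_integral f a b I2 -> I1 = I2.
Proof.
  intros f a b I1 I2 [Hab H1] [_ H2].
  apply Classical_Prop.NNPP; intro Hn.
  set (eps := Rabs (I1 - I2) / 2).
  assert (Heps : 0 < eps) by (unfold eps; assert (0 < Rabs (I1 - I2)) by (apply Rabs_pos_lt; intro; apply Hn; lra); lra).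
  destruct (H1 eps Heps) as [g1 [Hg1 K1]]. destruct (H2 eps Heps) as [g2 [Hg2 K2]].
  destruct (cousin (fun t => Rmin (g1 t) (g2 t)) a b) as [P [HP HF]]; auto.
  { intro t. apply Rmin_glb_lt; auto. }
  specialize (K1 P HP (fine_mono _ _ P (fun t => Rmin_l _ _) HF)).
  specialize (K2 P HP (fine_mono _ _ P (fun t => Rmin_r _ _) HF)).
  assert (Rabs (I1 - I2) <= Rabs (rsum f P - I1) + Rabs (rsum f P - I2)).
  { replace (I1 - I2) with (-(rsum f P - I1) + (rsum f P - I2)) by ring.
    rewrite <- (Rabs_Ropp (rsum f P - I1)). apply Rabs_triang. }
  unfold eps in *. lra.
Qed.

Lemma ex_cont : forall f a b, a <= b -> (forall t, a <= t <= b -> continuity_pt f t) -> ex_RInt f a b.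
Proof.
  intros f a b Hab H. apply (ex_RInt_continuous (V:=R_CompleteNormedModule)).
  intros z Hz. rewrite Rmin_left, Rmax_right in Hz by lra.
  apply continuity_pt_filterlim. auto.
Qed.

Lemma pw2 : forall f g1 g2 a p b, a <= p <= b ->
  (forall t, a < t < p -> f t = g1 t) -> (forall t, p < t < b -> f t = g2 t) ->
  ex_RInt g1 a p -> ex_RInt g2 p b ->
  ex_RInt f a b /\ RInt f a b = RInt g1 a p + RInt g2 p b.
Proof.
  intros f g1 g2 a p b Hp H1 H2 E1 E2.
  assert (F1 : ex_RInt f a p).
  { apply (ex_RInt_ext g1); auto. intros t Ht. rewrite Rmin_left, Rmax_right in Ht by lra. symmetry; auto. }
  assert (F2 : ex_RInt f p b).
  { apply (ex_RInt_ext g2); auto. intros t Ht. rewrite Rmin_left, Rmax_right in Ht by lra. symmetry; auto. }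
  split.
  - apply (ex_RInt_Chasles f a p b F1 F2).
  - rewrite <- (RInt_Chasles (V:=R_CompleteNormedModule) f a p b F1 F2).
    rewrite (RInt_ext f g1 a p), (RInt_ext f g2 p b); [reflexivity| |].
    + intros t Ht. rewrite Rmin_left, Rmax_right in Ht by lra. auto.
    + intros t Ht. rewrite Rmin_left, Rmax_right in Ht by lra. auto.
Qed.

Lemma ex_ext_open : forall (f g : R -> R) a b, a <= b -> (forall t, a < t < b -> f t = g t) -> ex_RInt g a b -> ex_RInt f a b /\ RInt f a b = RInt g a b.
Proof.
  intros f g a b Hab H E. split.
  - apply (ex_RInt_ext g); auto. intros t Ht. rewrite Rmin_left, Rmax_right in Ht by lra. symmetry; auto.
  - apply RInt_ext. intros t Ht. rewrite Rmin_left, Rmax_right in Ht by lra. auto.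
Qed.

Lemma RInt_zero : forall a b : R, RInt (fun _ => 0) a b = 0.
Proof.
  intros a b. rewrite (RInt_const (V:=R_CompleteNormedModule)). unfold scal; simpl; unfold mult; simpl. ring.
Qed.

Lemma RInt_cst : forall a b (k : R), RInt (fun _ => k) a b = k * (b - a).
Proof.
  intros a b k. rewrite (RInt_const (V:=R_CompleteNormedModule)). unfold scal; simpl; unfold mult; simpl. ring.
Qed.

Lemma ex_cst : forall a b (k : R), ex_RInt (fun _ => k) a b.
Proof. intros. exists (scal (b - a) k). apply (is_RInt_const (V:=R_NormedModule)). Qed.

Lemma RInt_le' : forall (f g : R -> R) a b, a <= b -> ex_RInt f a b -> ex_RInt g a b ->
  (forall t, a < t < b -> f t <= g t) -> RInt f a b <= RInt g a b.
Proof. intros. apply RInt_le; auto. Qed.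

Lemma RInt_bound : forall (f : R -> R) a b M, a <= b -> ex_RInt f a b -> (forall t, a < t < b -> f t <= M) ->
  RInt f a b <= M * (b - a).
Proof.
  intros f a b M Hab E H. rewrite <- RInt_cst. apply RInt_le; auto. apply ex_cst.
Qed.

Lemma RInt_abs_bound : forall (f : R -> R) a b M, a <= b -> ex_RInt f a b -> (forall t, a < t < b -> Rabs (f t) <= M) ->
  Rabs (RInt f a b) <= M * (b - a).
Proof.
  intros f a b M Hab E H. apply Rle_trans with (RInt (fun t => Rabs (f t)) a b).
  - apply abs_RInt_le; auto.
  - apply RInt_bound; auto. apply (ex_RInt_norm f a b E).
Qed.

Lemma RInt_nonneg : forall (f : R -> R) a b, a <= b -> ex_RInt f a b -> (forall t, a < t < b -> 0 <= f t) -> 0 <= RInt f a b.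
Proof. intros. apply RInt_ge_0; auto. Qed.

Lemma RInt_add : forall (f g : R -> R) a b, ex_RInt f a b -> ex_RInt g a b ->
  RInt (fun t => f t + g t) a b = RInt f a b + RInt g a b.
Proof. intros. apply (RInt_plus (V:=R_CompleteNormedModule)); auto. Qed.

Lemma ex_add : forall (f g : R -> R) a b, ex_RInt f a b -> ex_RInt g a b -> ex_RInt (fun t => f t + g t) a b.
Proof. intros. apply (ex_RInt_plus (V:=R_NormedModule) f g); auto. Qed.

Lemma RInt_mulc : forall (f : R -> R) a b (k : R), ex_RInt f a b -> RInt (fun t => k * f t) a b = k * RInt f a b.
Proof. intros. apply (RInt_scal (V:=R_CompleteNormedModule)); auto. Qed.

Lemma ex_mulc : forall (f : R -> R) a b (k : R), ex_RInt f a b -> ex_RInt (fun t => k * f t) a b.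
Proof. intros. apply (ex_RInt_scal (V:=R_NormedModule) f a b k); auto. Qed.

Lemma RInt_extR : forall (f g : R -> R) a b, (forall x : R, Rmin a b < x < Rmax a b -> f x = g x) -> RInt f a b = RInt g a b.
Proof. intros. apply RInt_ext. auto. Qed.

Lemma Rabs_le_inv : forall a b, Rabs a <= b -> - b <= a <= b.
Proof. intros a b. unfold Rabs. destruct (Rcase_abs a); intros; lra. Qed.

Definition Concl (C0 : R) (W : R -> R) (sigma : R) (y u : R -> R) (c d s : R) : Prop :=
  exists eps0, 0 < eps0 /\ exists U G : R -> R -> R,
    (forall e, 0 < e < eps0 ->
       W12 c d (U e) (G e) /\
       (exists c' d', c < c' /\ c' <= d' /\ d' < d /\
          forall t, c < t < d -> (t < c' \/ d' < t) -> U e t = u t) /\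
       (forall t, c < t < d -> Rabs (U e t) <= C0) /\
       (exists I, Lint (fun t => U e t * y t) c d I /\
                  Lint (fun t => u t * y t) c d I)) /\
    (forall eta, 0 < eta -> exists del, 0 < del /\ forall e, 0 < e < del -> e < eps0 ->
       exists I, Lint (fun t => Rabs (U e t - u t)) c d I /\ I < eta) /\
    (forall eta, 0 < eta -> exists del, 0 < del /\ forall e, 0 < e < del -> e < eps0 ->
       exists E, Lint (fun t => (e * G e t ^ 2 + W (U e t) / e) * y t) c d E /\
                 2 * PI * E <= 2 * PI * sigma * y s + eta).

Lemma HK_const0 : forall t1 t2 (z : R), t1 <= t2 -> HK_integral (fun _ => 0) t1 t2 (z - z).
Proof.
  intros. apply RInt_HK; auto. replace (z - z) with (scal (t2 - t1) (0:R)).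
  - apply (is_RInt_const (V:=R_NormedModule)).
  - unfold scal; simpl; unfold mult; simpl. ring.
Qed.

Lemma Lint_ex : forall f a b, a <= b -> ex_RInt f a b -> exists I, Lint f a b I.
Proof. intros. exists (RInt f a b). apply Lint_of; auto. Qed.

Lemma const_case : forall C0 W sigma y u c d s z m0, 1 < C0 -> c < d -> c < m0 < d ->
  (z = 1 \/ z = -1) -> W z = 0 -> 0 <= sigma -> 0 < y s ->
  (forall t, c <= t <= d -> continuity_pt y t) ->
  (forall t, c < t < d -> t <> m0 -> u t = z) -> Concl C0 W sigma y u c d s.
Proof.
  intros C0 W sigma y u c d s z m0 HC0 Hcd Hm Hz HWz Hsig Hys Hy Hu.
  exists 1. split; [lra|]. exists (fun _ _ => z), (fun _ _ => 0).
  assert (Ey : ex_RInt y c d) by (apply ex_cont; auto; lra).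
  split; [intros e He; split; [|split; [|split]]| split].
  - unfold W12. split; [|split; [|split; [|split]]].
    + apply Lint_ex; [lra| apply ex_cst].
    + apply Lint_ex; [lra| apply ex_cst].
    + apply Lint_ex; [lra| apply ex_cst].
    + apply Lint_ex; [lra| apply ex_cst].
    + intros ? ? ? ? ?. apply HK_const0; auto.
  - exists m0, m0. repeat split; try lra. intros t Ht Ho. symmetry. apply Hu; auto. lra.
  - intros t _. destruct Hz; subst z; rewrite ?Rabs_R1, ?Rabs_m1; lra.
  - exists (RInt (fun t => z * y t) c d). split.
    + apply Lint_of; [lra| apply ex_mulc; auto].
    + destruct (pw2 (fun t => u t * y t) (fun t => z * y t) (fun t => z * y t) c m0 d) as [E1 E2].
      * lra.
      * intros t Ht. rewrite Hu; auto; lra.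
      * intros t Ht. rewrite Hu; auto; lra.
      * apply ex_mulc. apply (ex_RInt_Chasles_1 y c m0 d); auto; lra.
      * apply ex_mulc. apply (ex_RInt_Chasles_2 y c m0 d); auto; lra.
      * replace (RInt (fun t => z * y t) c d) with (RInt (fun t => u t * y t) c d).
        apply Lint_of; auto; lra.
        rewrite E2. apply (RInt_Chasles (V:=R_CompleteNormedModule)).
        apply ex_mulc. apply (ex_RInt_Chasles_1 y c m0 d); auto; lra.
        apply ex_mulc. apply (ex_RInt_Chasles_2 y c m0 d); auto; lra.
  - intros eta Heta. exists 1. split; [lra|]. intros e He _.
    exists 0. split; [|auto].
    destruct (pw2 (fun t => Rabs (z - u t)) (fun _ => 0) (fun _ => 0) c m0 d) as [E1 E2].
    * lra.
    * intros t Ht. rewrite Hu; try lra. replace (z - z) with 0 by ring. apply Rabs_R0.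
    * intros t Ht. rewrite Hu; try lra. replace (z - z) with 0 by ring. apply Rabs_R0.
    * apply ex_cst.
    * apply ex_cst.
    * rewrite !RInt_zero, Rplus_0_r in E2. rewrite <- E2.
      apply Lint_of; auto; lra.
  - intros eta Heta. exists 1. split; [lra|]. intros e He _.
    exists 0. split.
    + destruct (ex_ext_open (fun t => (e * 0 ^ 2 + W z / e) * y t) (fun _ => 0) c d) as [E1 E2].
      * lra.
      * intros t _. rewrite HWz. unfold Rdiv. ring.
      * apply ex_cst.
      * rewrite RInt_zero in E2. assert (HL := Lint_of _ c d (Rlt_le _ _ Hcd) E1). rewrite E2 in HL. exact HL.
    + assert (0 <= 2 * PI * sigma * y s).
      { apply Rmult_le_pos; [apply Rmult_le_pos; [pose proof PI_RGT_0; lra| auto]| lra]. }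
      lra.
Qed.

Lemma cR_plus : forall (f g : R -> R) x, continuous f x -> continuous g x -> continuous (fun t => f t + g t) x.
Proof. intros. apply (continuous_plus f g x); auto. Qed.
Lemma cR_mult : forall (f g : R -> R) x, continuous f x -> continuous g x -> continuous (fun t => f t * g t) x.
Proof. intros. apply (continuous_mult f g x); auto. Qed.
Lemma cR_const : forall (k : R) x, continuous (fun _ : R => k) x.
Proof. intros. apply continuous_const. Qed.
Lemma cR_id : forall x, continuous (fun t : R => t) x.
Proof. intros. apply continuous_id. Qed.
Lemma cR_comp : forall (f g : R -> R) x, continuous f x -> continuous g (f x) -> continuous (fun t => g (f t)) x.
Proof. intros. apply (continuous_comp f g x); auto. Qed.
Lemma cR_opp : forall (f : R -> R) x, continuous f x -> continuous (fun t => - f t) x.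
Proof. intros. apply (continuous_opp f x); auto. Qed.
Lemma cR_minus : forall (f g : R -> R) x, continuous f x -> continuous g x -> continuous (fun t => f t - g t) x.
Proof. intros. unfold Rminus. apply cR_plus; auto. apply cR_opp; auto. Qed.
Lemma cR_sqrt : forall (f : R -> R) x, continuous f x -> continuous (fun t => sqrt (f t)) x.
Proof. intros. apply (continuous_sqrt_comp f x); auto. Qed.
Lemma cR_inv : forall (f : R -> R) x, continuous f x -> f x <> 0 -> continuous (fun t => / f t) x.
Proof. intros. apply (continuous_Rinv_comp f x); auto. Qed.
Lemma cR_abs : forall (f : R -> R) x, continuous f x -> continuous (fun t => Rabs (f t)) x.
Proof. intros. apply (continuous_Rabs_comp f x); auto. Qed.
Lemma cR_pt : forall f x, continuity_pt f x -> continuous f x.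
Proof. intros. apply continuity_pt_filterlim; auto. Qed.
Lemma cR_to_pt : forall f x, continuous f x -> continuity_pt f x.
Proof. intros. apply continuity_pt_filterlim; auto. Qed.
Lemma cR_pow2 : forall (f : R -> R) x, continuous f x -> continuous (fun t => f t ^ 2) x.
Proof. intros. apply (continuous_ext (fun t => f t * f t)). intros; simpl; ring. apply cR_mult; auto. Qed.

Lemma ex_contc : forall (f : R -> R) a b, a <= b -> (forall t, a <= t <= b -> continuous f t) -> ex_RInt f a b.
Proof. intros. apply ex_cont; auto. intros. apply cR_to_pt; auto. Qed.

Definition clamp (r : R) : R := (Rabs (r + 1) - Rabs (r - 1)) / 2.

Lemma clamp_cont : forall x, continuous clamp x.
Proof.
  intros x. unfold clamp. apply (continuous_ext (fun r => (Rabs (r+1) - Rabs (r-1)) * /2)).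
  { intros; unfold Rdiv; auto. }
  apply cR_mult; [|apply cR_const]. apply cR_minus; apply cR_abs.
  - apply cR_plus; [apply cR_id| apply cR_const].
  - apply cR_minus; [apply cR_id| apply cR_const].
Qed.

Lemma clamp_id : forall r, -1 <= r <= 1 -> clamp r = r.
Proof. intros r H. unfold clamp. rewrite Rabs_right by lra. rewrite Rabs_left1 by lra. field. Qed.
Lemma clamp_lo : forall r, r <= -1 -> clamp r = -1.
Proof. intros r H. unfold clamp. rewrite Rabs_left1 by lra. rewrite Rabs_left1 by lra. field. Qed.
Lemma clamp_hi : forall r, 1 <= r -> clamp r = 1.
Proof. intros r H. unfold clamp. rewrite Rabs_right by lra. rewrite Rabs_right by lra. field. Qed.
Lemma clamp_rng : forall r, -1 <= clamp r <= 1.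
Proof.
  intros r. destruct (Rle_dec r (-1)). rewrite clamp_lo; lra.
  destruct (Rle_dec 1 r). rewrite clamp_hi; lra. rewrite clamp_id; lra.
Qed.

Definition phi (Wz : R -> R) (nu r : R) : R := sqrt (Wz (clamp r) + nu ^ 2).
Definition Tq (Wz : R -> R) (nu e s r : R) : R := s + e * RInt (fun p => / phi Wz nu p) 0 r.
Definition Qi (Wz : R -> R) (nu e s t : R) : R := epsilon (inhabits 0) (fun r => Tq Wz nu e s r = t).

Definition PH (Wz : R -> R) (nu e : R) : Prop :=
  (forall r, continuous Wz r) /\ (forall r, 0 <= Wz r) /\ 0 < nu /\ 0 < e.

Lemma phi_ge : forall Wz nu e r, PH Wz nu e -> nu <= phi Wz nu r.
Proof.
  intros Wz nu e r (H1 & H2 & H3 & H4). unfold phi.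
  rewrite <- (sqrt_pow2 nu) at 1 by lra. apply sqrt_le_1_alt. specialize (H2 (clamp r)). lra.
Qed.

Lemma phi_pos : forall Wz nu e r, PH Wz nu e -> 0 < phi Wz nu r.
Proof. intros. pose proof (phi_ge Wz nu e r H). destruct H as (_ & _ & H & _). lra. Qed.

Lemma phi_cont : forall Wz nu e r, PH Wz nu e -> continuous (phi Wz nu) r.
Proof.
  intros Wz nu e r H. destruct H as (H1 & H2 & H3 & H4). unfold phi.
  apply cR_sqrt. apply cR_plus; [|apply cR_const].
  apply cR_comp; [apply clamp_cont| apply H1].
Qed.

Lemma iphi_cont : forall Wz nu e r, PH Wz nu e -> continuous (fun p => / phi Wz nu p) r.
Proof.
  intros. apply cR_inv. apply (phi_cont Wz nu e); auto. pose proof (phi_pos Wz nu e r H). lra.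
Qed.

Lemma phi_bnd : forall Wz nu e, PH Wz nu e -> exists M, 0 < M /\ forall r, phi Wz nu r <= M.
Proof.
  intros Wz nu e H. pose proof H as (H1 & H2 & H3 & H4).
  destruct (continuity_ab_maj Wz (-1) 1) as [mx [Hmx _]]; [lra| intros; apply cR_to_pt; auto|].
  exists (sqrt (Wz mx + nu ^ 2)). split.
  - apply sqrt_lt_R0. specialize (H2 mx). nra.
  - intros r. unfold phi. apply sqrt_le_1_alt. specialize (Hmx (clamp r) (clamp_rng r)). lra.
Qed.

Lemma ex_iphi : forall Wz nu e a b, PH Wz nu e -> ex_RInt (fun p => / phi Wz nu p) a b.
Proof.
  intros. apply (ex_RInt_continuous (V:=R_CompleteNormedModule)). intros. apply (iphi_cont Wz nu e); auto.
Qed.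

Lemma Tq_derive : forall Wz nu e s r, PH Wz nu e -> is_derive (Tq Wz nu e s) r (e * / phi Wz nu r).
Proof.
  intros Wz nu e s r H. unfold Tq.
  apply (is_derive_ext (fun r => s + e * RInt (fun p => / phi Wz nu p) 0 r)); [reflexivity|].
  replace (e * / phi Wz nu r) with (plus zero (e * / phi Wz nu r)) by (unfold plus, zero; simpl; ring).
  apply (is_derive_plus (K:=R_AbsRing) (V:=R_NormedModule) (fun _ => s)). apply (is_derive_const (K:=R_AbsRing) (V:=R_NormedModule)).
  apply is_derive_scal.
  apply (is_derive_RInt (fun p => / phi Wz nu p) (fun r => RInt (fun p => / phi Wz nu p) 0 r) 0 r).
  - apply filter_forall. intros x. apply (RInt_correct (V:=R_CompleteNormedModule)). apply (ex_iphi Wz nu e); auto.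
  - apply (iphi_cont Wz nu e); auto.
Qed.

Lemma Tq_cont : forall Wz nu e s r, PH Wz nu e -> continuous (Tq Wz nu e s) r.
Proof.
  intros. apply (ex_derive_continuous (K:=R_AbsRing) (V:=R_NormedModule)). eexists. apply Tq_derive; auto.
Qed.

Lemma Tq_diff : forall Wz nu e s r1 r2, PH Wz nu e ->
  Tq Wz nu e s r2 - Tq Wz nu e s r1 = e * RInt (fun p => / phi Wz nu p) r1 r2.
Proof.
  intros. unfold Tq.
  rewrite <- (RInt_Chasles (V:=R_CompleteNormedModule) (fun p => / phi Wz nu p) 0 r1 r2).
  - unfold plus; simpl. ring.
  - apply (ex_iphi Wz nu e); auto.
  - apply (ex_iphi Wz nu e); auto.
Qed.

Lemma Tq_upper : forall Wz nu e s r1 r2, PH Wz nu e -> r1 <= r2 ->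
  Tq Wz nu e s r2 - Tq Wz nu e s r1 <= e * (r2 - r1) / nu.
Proof.
  intros Wz nu e s r1 r2 H Hr. rewrite Tq_diff by auto. pose proof H as (_ & _ & Hn & He).
  assert (RInt (fun p => / phi Wz nu p) r1 r2 <= / nu * (r2 - r1)).
  { apply RInt_bound; auto. apply (ex_iphi Wz nu e); auto.
    intros t _. apply Rinv_le_contravar; auto. apply (phi_ge Wz nu e); auto. }
  unfold Rdiv. replace (e * (r2 - r1) * / nu) with (e * (/ nu * (r2 - r1))) by ring.
  apply Rmult_le_compat_l; lra.
Qed.

Lemma Tq_lower : forall Wz nu e s M r1 r2, PH Wz nu e -> 0 < M -> (forall r, phi Wz nu r <= M) -> r1 <= r2 ->
  e * (r2 - r1) / M <= Tq Wz nu e s r2 - Tq Wz nu e s r1.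
Proof.
  intros Wz nu e s M r1 r2 H HM HB Hr. rewrite Tq_diff by auto. pose proof H as (_ & _ & Hn & He).
  assert (/ M * (r2 - r1) <= RInt (fun p => / phi Wz nu p) r1 r2).
  { rewrite <- RInt_cst. apply RInt_le; auto. apply ex_cst. apply (ex_iphi Wz nu e); auto.
    intros t _. apply Rinv_le_contravar; auto. apply (phi_pos Wz nu e); auto. }
  unfold Rdiv. replace (e * (r2 - r1) * / M) with (e * (/ M * (r2 - r1))) by ring.
  apply Rmult_le_compat_l; lra.
Qed.

Lemma Tq_strict : forall Wz nu e s r1 r2, PH Wz nu e -> r1 < r2 -> Tq Wz nu e s r1 < Tq Wz nu e s r2.
Proof.
  intros Wz nu e s r1 r2 H Hr. destruct (phi_bnd Wz nu e H) as [M [HM HB]].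
  pose proof (Tq_lower Wz nu e s M r1 r2 H HM HB (Rlt_le _ _ Hr)). pose proof H as (_ & _ & Hn & He).
  assert (0 < e * (r2 - r1) / M) by (apply Rdiv_lt_0_compat; auto; nra). lra.
Qed.

Lemma Tq_0 : forall Wz nu e s, Tq Wz nu e s 0 = s.
Proof. intros. unfold Tq. rewrite RInt_point. unfold zero; simpl. ring. Qed.

Lemma Tq_surj : forall Wz nu e s t, PH Wz nu e -> exists r, Tq Wz nu e s r = t.
Proof.
  intros Wz nu e s t H. destruct (phi_bnd Wz nu e H) as [M [HM HB]]. pose proof H as (_ & _ & Hn & He).
  assert (Hc : continuity (Tq Wz nu e s)) by (intro r; apply cR_to_pt; apply Tq_cont; auto).
  destruct (Rle_dec s t) as [Hst|Hst].
  - set (r2 := (t - s) * M / e).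
    assert (0 <= r2) by (unfold r2; apply Rmult_le_pos; [apply Rmult_le_pos; lra| left; apply Rinv_0_lt_compat; lra]).
    pose proof (Tq_lower Wz nu e s M 0 r2 H HM HB H0). rewrite Tq_0 in H1.
    replace (e * (r2 - 0) / M) with (t - s) in H1 by (unfold r2; field; lra).
    destruct (IVT_gen (Tq Wz nu e s) 0 r2 t Hc) as [r [_ Hr]].
    + rewrite Tq_0. rewrite Rmin_left, Rmax_right; lra.
    + eauto.
  - set (r1 := (t - s) * M / e).
    assert (r1 <= 0) by (unfold r1; unfold Rdiv; rewrite Rmult_assoc; apply Rmult_le_0_r; [lra| apply Rmult_le_pos; [lra| left; apply Rinv_0_lt_compat; lra]]).
    pose proof (Tq_lower Wz nu e s M r1 0 H HM HB H0). rewrite Tq_0 in H1.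
    replace (e * (0 - r1) / M) with (s - t) in H1 by (unfold r1; field; lra).
    destruct (IVT_gen (Tq Wz nu e s) r1 0 t Hc) as [r [_ Hr]].
    + rewrite Tq_0. rewrite Rmin_left, Rmax_right; lra.
    + eauto.
Qed.

Lemma Qi_spec : forall Wz nu e s t, PH Wz nu e -> Tq Wz nu e s (Qi Wz nu e s t) = t.
Proof.
  intros. unfold Qi. apply (epsilon_spec (inhabits 0) (fun r => Tq Wz nu e s r = t)).
  apply Tq_surj; auto.
Qed.

Lemma Tq_inj : forall Wz nu e s r1 r2, PH Wz nu e -> Tq Wz nu e s r1 = Tq Wz nu e s r2 -> r1 = r2.
Proof.
  intros. destruct (Rtotal_order r1 r2) as [Hl|[Hl|Hl]]; auto.
  - pose proof (Tq_strict Wz nu e s _ _ H Hl). lra.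
  - pose proof (Tq_strict Wz nu e s _ _ H Hl). lra.
Qed.

Lemma Qi_Tq : forall Wz nu e s r, PH Wz nu e -> Qi Wz nu e s (Tq Wz nu e s r) = r.
Proof. intros. apply (Tq_inj Wz nu e s); auto. apply Qi_spec; auto. Qed.

Lemma Qi_mono : forall Wz nu e s t1 t2, PH Wz nu e -> t1 <= t2 -> Qi Wz nu e s t1 <= Qi Wz nu e s t2.
Proof.
  intros. apply Rnot_lt_le. intro Hl. apply (Tq_strict Wz nu e s) in Hl; auto.
  rewrite !Qi_spec in Hl by auto. lra.
Qed.

Lemma Qi_lt : forall Wz nu e s t r, PH Wz nu e -> t < Tq Wz nu e s r -> Qi Wz nu e s t < r.
Proof.
  intros. apply Rnot_le_lt. intro Hl. destruct (Req_dec (Qi Wz nu e s t) r).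
  - subst r. rewrite Qi_spec in H0; auto. lra.
  - assert (r < Qi Wz nu e s t) by lra. apply (Tq_strict Wz nu e s) in H2; auto. rewrite Qi_spec in H2; auto. lra.
Qed.

Lemma Qi_gt : forall Wz nu e s t r, PH Wz nu e -> Tq Wz nu e s r < t -> r < Qi Wz nu e s t.
Proof.
  intros. apply Rnot_le_lt. intro Hl. destruct (Req_dec (Qi Wz nu e s t) r).
  - subst r. rewrite Qi_spec in H0; auto. lra.
  - assert (Qi Wz nu e s t < r) by lra. apply (Tq_strict Wz nu e s) in H2; auto. rewrite Qi_spec in H2; auto. lra.
Qed.

Lemma Qi_cont : forall Wz nu e s t, PH Wz nu e -> continuous (Qi Wz nu e s) t.
Proof.
  intros Wz nu e s t H. apply cR_pt. apply continuity_pt_locally. intros eps.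
  set (r := Qi Wz nu e s t).
  set (T := Tq Wz nu e s).
  assert (A1 : T (r - eps) < t) by (unfold T; rewrite <- (Qi_spec Wz nu e s t H); apply Tq_strict; auto; destruct eps; simpl; unfold r; lra).
  assert (A2 : t < T (r + eps)) by (unfold T; rewrite <- (Qi_spec Wz nu e s t H) at 1; apply Tq_strict; auto; destruct eps; simpl; unfold r; lra).
  assert (Hd : 0 < Rmin (t - T (r - eps)) (T (r + eps) - t)) by (apply Rmin_glb_lt; lra).
  exists (mkposreal _ Hd). intros t' Ht'. unfold ball in Ht'; simpl in Ht'. unfold AbsRing_ball, abs, minus, plus, opp in Ht'; simpl in Ht'.
  assert (Hm1 := Rmin_l (t - T (r - eps)) (T (r + eps) - t)).
  assert (Hm2 := Rmin_r (t - T (r - eps)) (T (r + eps) - t)).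
  apply Rabs_def2 in Ht'. destruct Ht' as [B1 B2].
  assert (C1 : Qi Wz nu e s t' < r + eps) by (apply Qi_lt; auto; fold T; lra).
  assert (C2 : r - eps < Qi Wz nu e s t') by (apply Qi_gt; auto; fold T; lra).
  fold r. apply Rabs_def1; lra.
Qed.

Lemma hQ_cont : forall Wz nu e s (h : R -> R) t, PH Wz nu e -> (forall r, continuous h r) ->
  continuous (fun τ => h (Qi Wz nu e s τ)) t.
Proof. intros. apply cR_comp; auto. apply Qi_cont; auto. Qed.

Lemma CoV : forall Wz nu e s (h : R -> R) a b, PH Wz nu e -> (forall r, continuous h r) ->
  ex_RInt (fun τ => h (Qi Wz nu e s τ)) (Tq Wz nu e s a) (Tq Wz nu e s b) /\
  RInt (fun τ => h (Qi Wz nu e s τ)) (Tq Wz nu e s a) (Tq Wz nu e s b) =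
  RInt (fun r => e * / phi Wz nu r * h r) a b.
Proof.
  intros Wz nu e s h a b H Hh. split.
  - apply (ex_RInt_continuous (V:=R_CompleteNormedModule)). intros. apply hQ_cont; auto.
  - pose proof (is_RInt_comp (V:=R_CompleteNormedModule) (fun τ => h (Qi Wz nu e s τ)) (Tq Wz nu e s)
      (fun r => e * / phi Wz nu r) a b) as HC.
    symmetry. apply is_RInt_unique.
    apply (is_RInt_ext (fun y => scal (e * / phi Wz nu y) (h (Qi Wz nu e s (Tq Wz nu e s y))))).
    + intros x _. rewrite Qi_Tq by auto. reflexivity.
    + apply HC.
      * intros. apply hQ_cont; auto.
      * intros. split; [apply Tq_derive; auto|]. apply cR_mult; [apply cR_const| apply (iphi_cont Wz nu e); auto].
Qed.

Lemma FTC_Q : forall Wz nu e s t1 t2, PH Wz nu e ->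
  is_RInt (fun t => phi Wz nu (Qi Wz nu e s t) / e) t1 t2 (Qi Wz nu e s t2 - Qi Wz nu e s t1).
Proof.
  intros Wz nu e s t1 t2 H. pose proof H as (_ & _ & Hn & He).
  assert (Hh : forall r, continuous (fun r => phi Wz nu r / e) r).
  { intros r. apply cR_mult; [apply (phi_cont Wz nu e); auto| apply cR_const]. }
  destruct (CoV Wz nu e s (fun r => phi Wz nu r / e) (Qi Wz nu e s t1) (Qi Wz nu e s t2) H Hh) as [E1 E2].
  rewrite !Qi_spec in E1, E2 by auto.
  replace (Qi Wz nu e s t2 - Qi Wz nu e s t1) with (RInt (fun t => phi Wz nu (Qi Wz nu e s t) / e) t1 t2).
  - apply (RInt_correct (V:=R_CompleteNormedModule)); auto.
  - rewrite E2. rewrite (RInt_extR _ (fun _ => 1)).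
    + rewrite RInt_cst. apply Rmult_1_l.
    + intros x _. pose proof (phi_pos Wz nu e x H). field. lra.
Qed.

Definition FT (U G : R -> R) (a b : R) : Prop :=
  forall t1 t2, a <= t1 -> t1 <= t2 -> t2 <= b -> is_RInt G t1 t2 (U t2 - U t1).

Lemma FT_glue : forall U G a p b, FT U G a p -> FT U G p b -> FT U G a b.
Proof.
  intros U G a p b H1 H2 t1 t2 A1 A2 A3.
  destruct (Rle_dec t2 p). { apply H1; auto. }
  destruct (Rle_dec p t1). { apply H2; auto. }
  replace (U t2 - U t1) with (plus (U p - U t1) (U t2 - U p)) by (unfold plus; simpl; ring).
  apply (is_RInt_Chasles G t1 p t2).
  - apply H1; lra.
  - apply H2; lra.
Qed.

Lemma FT_const : forall U G a b k, (forall t, a <= t <= b -> U t = k) -> (forall t, a < t < b -> G t = 0) -> FT U G a b.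
Proof.
  intros U G a b k HU HG t1 t2 A1 A2 A3. rewrite !HU by lra.
  apply (is_RInt_ext (fun _ => 0)).
  - intros x Hx. rewrite Rmin_left, Rmax_right in Hx by lra. rewrite HG; auto; lra.
  - replace (k - k) with (scal (t2 - t1) (0:R)) by (unfold scal; simpl; unfold mult; simpl; ring).
    apply (is_RInt_const (V:=R_NormedModule)).
Qed.

Lemma FT_smooth : forall (U G f df : R -> R) a b, (forall t, a <= t <= b -> U t = f t) -> (forall t, a < t < b -> G t = df t) ->
  (forall t, a <= t <= b -> is_derive f t (df t)) -> (forall t, a <= t <= b -> continuous df t) -> FT U G a b.
Proof.
  intros U G f df a b HU HG Hd Hc t1 t2 A1 A2 A3. rewrite !HU by lra.
  apply (is_RInt_ext df).
  - intros x Hx. rewrite Rmin_left, Rmax_right in Hx by lra. rewrite HG; auto; lra.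
  - apply (is_RInt_derive (V:=R_CompleteNormedModule) f df t1 t2).
    + intros x Hx. rewrite Rmin_left, Rmax_right in Hx by lra. apply Hd; lra.
    + intros x Hx. rewrite Rmin_left, Rmax_right in Hx by lra. apply Hc; lra.
Qed.

Lemma FT_trans : forall Wz nu e s U G a b z k, PH Wz nu e ->
  (forall t, a <= t <= b -> U t = z * Qi Wz nu e s t + k) ->
  (forall t, a < t < b -> G t = z * (phi Wz nu (Qi Wz nu e s t) / e)) -> FT U G a b.
Proof.
  intros Wz nu e s U G a b z k H HU HG t1 t2 A1 A2 A3. rewrite !HU by lra.
  apply (is_RInt_ext (fun t => z * (phi Wz nu (Qi Wz nu e s t) / e))).
  - intros x Hx. rewrite Rmin_left, Rmax_right in Hx by lra. rewrite HG; auto; lra.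
  - replace (z * Qi Wz nu e s t2 + k - (z * Qi Wz nu e s t1 + k)) with (scal z (Qi Wz nu e s t2 - Qi Wz nu e s t1))
      by (unfold scal; simpl; unfold mult; simpl; ring).
    apply (is_RInt_scal (V:=R_NormedModule) (fun t => phi Wz nu (Qi Wz nu e s t) / e)).
    apply FTC_Q; auto.
Qed.

Lemma W_quad : forall W z, W_ok W -> (z = 1 \/ z = -1) ->
  exists rho K, 0 < rho /\ 0 <= K /\ forall h, Rabs h <= rho -> W (z + h) <= K * h ^ 2.
Proof.
  intros W z HW Hz. destruct HW as (Hc & Hpos & Hzero & Hsm).
  assert (Wz : W z = 0) by (apply Hzero; auto).
  destruct (Hsm z Hz) as [del [Hdel [W1 [W2 Hd]]]].
  set (rho := del / 2).
  destruct (continuity_ab_maj (fun r => Rabs (W2 r)) (z - rho) (z + rho)) as [mx [Hmx _]].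
  { unfold rho; lra. }
  { intros c0 Hc0. apply cR_to_pt. apply cR_abs. apply cR_pt.
    destruct (Hd c0) as (_ & _ & H3). { unfold rho in Hc0. apply Rabs_def1; lra. } exact H3. }
  set (K := Rabs (W2 mx)).
  assert (HW1 : W1 z = 0).
  { destruct (Hd z) as (D1 & _ & _). { replace (z - z) with 0 by ring. rewrite Rabs_R0. lra. }
    set (pr := exist (fun l => derivable_pt_lim W z l) (W1 z) D1 : derivable_pt W z).
    rewrite <- (derive_pt_eq_0 W z (W1 z) pr D1).
    apply (deriv_minimum W (z - 1) (z + 1) z pr); try lra.
    intros x _ _. rewrite Wz. apply Hpos. }
  exists rho, K. split; [unfold rho; lra|]. split; [unfold K; apply Rabs_pos|].
  intros h Hh.
  assert (Dloc : forall c0, Rabs (c0 - z) <= rho -> derivable_pt_lim W c0 (W1 c0) /\ derivable_pt_lim W1 c0 (W2 c0)).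
  { intros c0 Hc0. destruct (Hd c0) as (A & B & _). { unfold rho in Hc0; lra. } auto. }
  assert (Kb : forall c0, z - rho <= c0 <= z + rho -> -K <= W2 c0 <= K).
  { intros c0 Hc0. specialize (Hmx c0 Hc0). simpl in Hmx. fold K in Hmx.
    apply Rabs_le_inv in Hmx. lra. }
  destruct (Rtotal_order h 0) as [Hn|[H0|Hp]].
  - apply Rabs_left in Hn as Ha. rewrite Ha in Hh.
    destruct (MVT_cor2 W W1 (z + h) z) as [c1 [E1 Hc1]]; [lra| intros c0 Hc0; apply Dloc; apply Rabs_le; lra|].
    destruct (MVT_cor2 W1 W2 c1 z) as [c2 [E2 Hc2]]; [lra| intros c0 Hc0; apply Dloc; apply Rabs_le; lra|].
    specialize (Kb c2 ltac:(lra)).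
    assert (W (z + h) = - W2 c2 * (z - c1) * h) by nra.
    rewrite H.
    assert (A : W2 c2 * (z - c1) <= K * (- h)) by nra.
    replace (- W2 c2 * (z - c1) * h) with ((W2 c2 * (z - c1)) * (- h)) by ring.
    replace (K * h ^ 2) with ((K * (- h)) * (- h)) by ring.
    apply Rmult_le_compat_r; lra.
  - subst h. rewrite Rplus_0_r, Wz. simpl. nra.
  - assert (Ha : Rabs h = h) by (apply Rabs_right; lra). rewrite Ha in Hh.
    destruct (MVT_cor2 W W1 z (z + h)) as [c1 [E1 Hc1]]; [lra| intros c0 Hc0; apply Dloc; apply Rabs_le; lra|].
    destruct (MVT_cor2 W1 W2 z c1) as [c2 [E2 Hc2]]; [lra| intros c0 Hc0; apply Dloc; apply Rabs_le; lra|].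
    specialize (Kb c2 ltac:(lra)).
    assert (W (z + h) = W2 c2 * (c1 - z) * h) by nra.
    rewrite H.
    assert (A : W2 c2 * (c1 - z) <= K * h) by nra.
    replace (K * h ^ 2) with ((K * h) * h) by ring.
    apply Rmult_le_compat_r; lra.
Qed.

Definition posp (x : R) : R := (x + Rabs x) / 2.
Definition bmp (al be t : R) : R := (posp ((t - al) * (be - t))) ^ 2.
Definition bd (al be t : R) : R := 2 * posp ((t - al) * (be - t)) * (al + be - 2 * t).
Definition Wzf (W : R -> R) (z : R) : R -> R := fun r => W (z * r).
Definition U0 W z nu e s t : R := z * clamp (Qi (Wzf W z) nu e s t).
Definition G0 W z nu e s t : R :=
  if Rlt_dec (Tq (Wzf W z) nu e s (-1)) t then
    if Rlt_dec t (Tq (Wzf W z) nu e s 1) then z * (phi (Wzf W z) nu (Qi (Wzf W z) nu e s t) / e) else 0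
  else 0.
Definition Uf W z nu e s al be lam t : R := U0 W z nu e s t + lam * bmp al be t.
Definition Gf W z nu e s al be lam t : R := G0 W z nu e s t + lam * bd al be t.

Lemma pos_pos : forall x, 0 <= x -> posp x = x.
Proof. intros. unfold posp. rewrite Rabs_right by lra. field. Qed.
Lemma pos_neg : forall x, x <= 0 -> posp x = 0.
Proof. intros. unfold posp. rewrite Rabs_left1 by lra. field. Qed.
Lemma pos_cont : forall (f : R -> R) x, continuous f x -> continuous (fun t => posp (f t)) x.
Proof.
  intros. unfold posp. apply (continuous_ext (fun t => (f t + Rabs (f t)) * / 2)); [intros; reflexivity|].
  apply cR_mult; [|apply cR_const]. apply cR_plus; auto. apply cR_abs; auto.
Qed.

Lemma prod_cont : forall al be x, continuous (fun t => (t - al) * (be - t)) x.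
Proof.
  intros. apply cR_mult; apply cR_minus; try apply cR_id; apply cR_const.
Qed.

Lemma bmp_cont : forall al be x, continuous (bmp al be) x.
Proof. intros. unfold bmp. apply cR_pow2. apply pos_cont. apply prod_cont. Qed.

Lemma bd_cont : forall al be x, continuous (bd al be) x.
Proof.
  intros. unfold bd. apply cR_mult; [apply cR_mult; [apply cR_const| apply pos_cont; apply prod_cont]|].
  apply cR_minus; [apply cR_const| apply cR_mult; [apply cR_const| apply cR_id]].
Qed.

Lemma bmp_out : forall al be t, al < be -> t <= al \/ be <= t -> bmp al be t = 0 /\ bd al be t = 0.
Proof.
  intros. unfold bmp, bd. rewrite pos_neg; [split; ring|]. destruct H0; nra.
Qed.

Lemma bmpL : forall al be t, al < be -> t <= al -> bmp al be t = 0.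
Proof. intros. apply bmp_out; auto. Qed.
Lemma bmpR : forall al be t, al < be -> be <= t -> bmp al be t = 0.
Proof. intros. apply bmp_out; auto. Qed.
Lemma bdL : forall al be t, al < be -> t <= al -> bd al be t = 0.
Proof. intros. apply bmp_out; auto. Qed.
Lemma bdR : forall al be t, al < be -> be <= t -> bd al be t = 0.
Proof. intros. apply bmp_out; auto. Qed.

Lemma bmp_in : forall al be t, al <= t <= be ->
  bmp al be t = ((t - al) * (be - t)) ^ 2 /\ bd al be t = 2 * ((t - al) * (be - t)) * (al + be - 2 * t).
Proof. intros. unfold bmp, bd. rewrite pos_pos; [split; ring| nra]. Qed.

Lemma bdI : forall al be t, al <= t <= be -> bd al be t = 2 * ((t - al) * (be - t)) * (al + be - 2 * t).
Proof. intros. apply bmp_in; auto. Qed.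
Lemma bmpI : forall al be t, al <= t <= be -> bmp al be t = ((t - al) * (be - t)) ^ 2.
Proof. intros. apply bmp_in; auto. Qed.

Lemma bmp_bnd : forall al be t, al < be -> 0 <= bmp al be t <= ((be - al) ^ 2 / 4) ^ 2.
Proof.
  intros al be t Hab. destruct (Rle_dec t al) as [H|H]; [rewrite (proj1 (bmp_out al be t Hab (or_introl H))); split; [lra| apply pow2_ge_0]|].
  destruct (Rle_dec be t) as [H'|H']; [rewrite (proj1 (bmp_out al be t Hab (or_intror H'))); split; [lra| apply pow2_ge_0]|].
  rewrite (proj1 (bmp_in al be t ltac:(lra))).
  assert (0 <= (t - al) * (be - t) <= (be - al) ^ 2 / 4) by (pose proof (pow2_ge_0 ((t - al) - (be - t))); split; nra).
  split; [nra|]. apply pow_incr. lra.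
Qed.

Lemma bd_bnd : forall al be t, al < be -> Rabs (bd al be t) <= 2 * ((be - al) ^ 2 / 4) * (be - al).
Proof.
  intros al be t Hab. assert (H0bd : 0 <= 2 * ((be - al) ^ 2 / 4) * (be - al)) by (apply Rmult_le_pos; [apply Rmult_le_pos; [lra| pose proof (pow2_ge_0 (be - al)); lra]| lra]).
  destruct (Rle_dec t al) as [H|H]; [rewrite (proj2 (bmp_out al be t Hab (or_introl H))), Rabs_R0; lra|].
  destruct (Rle_dec be t) as [H'|H']; [rewrite (proj2 (bmp_out al be t Hab (or_intror H'))), Rabs_R0; lra|].
  rewrite (bdI al be t) by lra.
  assert (0 <= (t - al) * (be - t) <= (be - al) ^ 2 / 4) by (pose proof (pow2_ge_0 ((t - al) - (be - t))); split; nra).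
  rewrite Rabs_mult. rewrite (Rabs_right (2 * ((t - al) * (be - t)))) by lra.
  apply Rmult_le_compat; try apply Rabs_pos; try lra.
  apply Rabs_le. lra.
Qed.


Lemma Qi_lo : forall Wz nu e s t, PH Wz nu e -> t <= Tq Wz nu e s (-1) -> Qi Wz nu e s t <= -1.
Proof. intros. rewrite <- (Qi_Tq Wz nu e s (-1)) by auto. apply Qi_mono; auto. Qed.
Lemma Qi_hi : forall Wz nu e s t, PH Wz nu e -> Tq Wz nu e s 1 <= t -> 1 <= Qi Wz nu e s t.
Proof. intros. rewrite <- (Qi_Tq Wz nu e s 1) by auto. apply Qi_mono; auto. Qed.

Lemma U0_lo : forall W z nu e s t, PH (Wzf W z) nu e -> t <= Tq (Wzf W z) nu e s (-1) -> U0 W z nu e s t = - z.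
Proof. intros. unfold U0. rewrite clamp_lo. ring. apply Qi_lo; auto. Qed.
Lemma U0_hi : forall W z nu e s t, PH (Wzf W z) nu e -> Tq (Wzf W z) nu e s 1 <= t -> U0 W z nu e s t = z.
Proof. intros. unfold U0. rewrite clamp_hi. ring. apply Qi_hi; auto. Qed.
Lemma Qi_mid : forall Wz nu e s t, PH Wz nu e -> Tq Wz nu e s (-1) <= t <= Tq Wz nu e s 1 -> -1 <= Qi Wz nu e s t <= 1.
Proof.
  intros. split.
  - rewrite <- (Qi_Tq Wz nu e s (-1)) by auto. apply Qi_mono; auto; lra.
  - rewrite <- (Qi_Tq Wz nu e s 1) by auto. apply Qi_mono; auto; lra.
Qed.
Lemma U0_mid : forall W z nu e s t, PH (Wzf W z) nu e -> Tq (Wzf W z) nu e s (-1) <= t <= Tq (Wzf W z) nu e s 1 ->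
  U0 W z nu e s t = z * Qi (Wzf W z) nu e s t.
Proof. intros. unfold U0. rewrite clamp_id; auto. apply Qi_mid; auto. Qed.

Lemma G0_out : forall W z nu e s t, t <= Tq (Wzf W z) nu e s (-1) \/ Tq (Wzf W z) nu e s 1 <= t -> G0 W z nu e s t = 0.
Proof.
  intros. unfold G0. destruct (Rlt_dec _ t); [|reflexivity]. destruct (Rlt_dec t _); [|reflexivity]. lra.
Qed.
Lemma G0_mid : forall W z nu e s t, Tq (Wzf W z) nu e s (-1) < t < Tq (Wzf W z) nu e s 1 ->
  G0 W z nu e s t = z * (phi (Wzf W z) nu (Qi (Wzf W z) nu e s t) / e).
Proof.
  intros. unfold G0. destruct (Rlt_dec _ t); [|lra]. destruct (Rlt_dec t _); [reflexivity|lra].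
Qed.

Lemma U0_cont : forall W z nu e s t, PH (Wzf W z) nu e -> continuous (U0 W z nu e s) t.
Proof.
  intros. unfold U0. apply cR_mult; [apply cR_const|]. apply cR_comp; [apply Qi_cont; auto| apply clamp_cont].
Qed.

Lemma Uf_cont : forall W z nu e s al be lam t, PH (Wzf W z) nu e -> continuous (Uf W z nu e s al be lam) t.
Proof.
  intros. unfold Uf. apply cR_plus; [apply U0_cont; auto|]. apply cR_mult; [apply cR_const| apply bmp_cont].
Qed.

Lemma p_bounds : forall Wz nu e s, PH Wz nu e ->
  Tq Wz nu e s (-1) < s < Tq Wz nu e s 1 /\ s - Tq Wz nu e s (-1) <= e / nu /\ Tq Wz nu e s 1 - s <= e / nu.
Proof.
  intros Wz nu e s H. pose proof (Tq_0 Wz nu e s) as T0.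
  pose proof (Tq_strict Wz nu e s (-1) 0 H ltac:(lra)). pose proof (Tq_strict Wz nu e s 0 1 H ltac:(lra)).
  pose proof (Tq_upper Wz nu e s (-1) 0 H ltac:(lra)). pose proof (Tq_upper Wz nu e s 0 1 H ltac:(lra)).
  rewrite T0 in *. replace (e * (0 - -1) / nu) with (e / nu) in H2 by (field; destruct H as (_&_&?&_); lra).
  replace (e * (1 - 0) / nu) with (e / nu) in H3 by (field; destruct H as (_&_&?&_); lra).
  lra.
Qed.

Lemma FT_all : forall W z nu e s al be lam c d, PH (Wzf W z) nu e ->
  c <= Tq (Wzf W z) nu e s (-1) -> Tq (Wzf W z) nu e s 1 <= al -> al < be -> be <= d ->
  FT (Uf W z nu e s al be lam) (Gf W z nu e s al be lam) c d.
Proof.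
  intros W z nu e s al be lam c d H A1 A2 A3 A4.
  pose proof (p_bounds (Wzf W z) nu e s H) as (B1 & _ & _).
  apply FT_glue with (Tq (Wzf W z) nu e s (-1)).
  { apply FT_const with (- z).
    - intros t Ht. unfold Uf. rewrite U0_lo by (auto; lra). rewrite (bmpL al be t) by lra. ring.
    - intros t Ht. unfold Gf. rewrite G0_out by (left; lra). rewrite (bdL al be t) by lra. ring. }
  apply FT_glue with (Tq (Wzf W z) nu e s 1).
  { apply (FT_trans (Wzf W z) nu e s) with (z := z) (k := 0); auto.
    - intros t Ht. unfold Uf. rewrite U0_mid by auto. rewrite (bmpL al be t) by lra. ring.
    - intros t Ht. unfold Gf. rewrite G0_mid by auto. rewrite (bdL al be t) by lra. ring. }
  apply FT_glue with al.
  { apply FT_const with z.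
    - intros t Ht. unfold Uf. rewrite U0_hi by (auto; lra). rewrite (bmpL al be t) by lra. ring.
    - intros t Ht. unfold Gf. rewrite G0_out by (right; lra). rewrite (bdL al be t) by lra. ring. }
  apply FT_glue with be.
  { apply FT_smooth with (f := fun t => z + lam * ((t - al) * (be - t)) ^ 2)
                         (df := fun t => lam * (2 * ((t - al) * (be - t)) * (al + be - 2 * t))).
    - intros t Ht. unfold Uf. rewrite U0_hi by (auto; lra). rewrite (proj1 (bmp_in al be t Ht)). reflexivity.
    - intros t Ht. unfold Gf. rewrite G0_out by (right; lra). rewrite (bdI al be t) by lra. ring.
    - intros t _. auto_derive; auto. ring.
    - intros t _. apply cR_mult; [apply cR_const|]. apply cR_mult; [apply cR_mult; [apply cR_const| apply prod_cont]|].
      apply cR_minus; [apply cR_const| apply cR_mult; [apply cR_const| apply cR_id]]. }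
  { apply FT_const with z.
    - intros t Ht. unfold Uf. rewrite U0_hi by (auto; lra). rewrite (bmpR al be t) by lra. ring.
    - intros t Ht. unfold Gf. rewrite G0_out by (right; lra). rewrite (bdR al be t) by lra. ring. }
Qed.

Lemma W_cont : forall W r, W_ok W -> continuous W r.
Proof. intros W r H. destruct H as (H & _). apply cR_pt. apply H. Qed.

Lemma sqrtW_cont : forall W z r, W_ok W -> continuous (fun r => sqrt (W (z * r))) r.
Proof.
  intros. apply cR_sqrt. apply cR_comp; [apply cR_mult; [apply cR_const| apply cR_id]|]. apply W_cont; auto.
Qed.

Lemma sigma_rel : forall W sigma z, W_ok W -> Lint (fun r => sqrt (W r)) (-1) 1 (sigma / 2) -> (z = 1 \/ z = -1) ->
  RInt (fun r => sqrt (W (z * r))) (-1) 1 = sigma / 2.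
Proof.
  intros W sigma z HW HL Hz.
  assert (E0 : ex_RInt (fun r => sqrt (W r)) (-1) 1).
  { apply ex_contc; [lra|]. intros. apply cR_sqrt. apply W_cont; auto. }
  assert (R0 : RInt (fun r => sqrt (W r)) (-1) 1 = sigma / 2).
  { apply (HK_unique (fun r => sqrt (W r)) (-1) 1); [| apply HL].
    apply RInt_HK; [lra|]. apply (RInt_correct (V:=R_CompleteNormedModule)); auto. }
  destruct Hz as [-> | ->].
  - rewrite <- R0. apply RInt_extR. intros; rewrite Rmult_1_l; reflexivity.
  - pose proof (RInt_comp_lin (V:=R_CompleteNormedModule) (fun r => sqrt (W r)) (-1) 0 (-1) 1) as HC.
    replace (-1 * -1 + 0) with 1 in HC by ring. replace (-1 * 1 + 0) with (-1) in HC by ring.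
    assert (E1 : ex_RInt (fun r => sqrt (W r)) 1 (-1)) by (apply (ex_RInt_swap (V:=R_NormedModule)); auto).
    specialize (HC E1).
    rewrite <- (opp_RInt_swap (V:=R_CompleteNormedModule) _ (-1) 1 E0) in HC.
    assert (E2 : ex_RInt (fun r => sqrt (W (-1 * r))) (-1) 1).
    { apply ex_contc; [lra|]. intros. apply sqrtW_cont; auto. }
    rewrite (RInt_extR (fun r => sqrt (W (-1 * r))) (fun y => sqrt (W (-1 * y + 0)))) by (intros; rewrite Rplus_0_r; reflexivity).
    rewrite (RInt_ext (fun y => sqrt (W (-1 * y + 0))) (fun y => opp (scal (-1) (sqrt (W (-1 * y + 0)))))).
    2: { intros. unfold opp, scal; simpl; unfold mult; simpl. ring. }
    rewrite (RInt_opp (V:=R_CompleteNormedModule)).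
    + etransitivity; [apply f_equal; exact HC|]. unfold opp; simpl. rewrite <- R0. ring.
    + apply (ex_RInt_scal (V:=R_NormedModule)). apply (ex_RInt_ext (fun r => sqrt (W (-1 * r)))); auto.
      intros; rewrite Rplus_0_r; reflexivity.
Qed.

Lemma y_lip : forall A0 a0 b0 x y sp, in_C A0 a0 b0 x y sp -> exists L, 0 <= L /\
  forall t1 t2, a0 <= t1 <= b0 -> a0 <= t2 <= b0 -> Rabs (y t1 - y t2) <= L * Rabs (t1 - t2).
Proof.
  intros A0 a0 b0 x y sp H. destruct H as ([L HL] & _).
  exists (Rmax L 0). split; [apply Rmax_r|]. intros t1 t2 H1 H2.
  specialize (HL t1 t2 H1 H2).
  apply Rle_trans with (sqrt ((x t1 - x t2) ^ 2 + (y t1 - y t2) ^ 2)).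
  - rewrite <- sqrt_Rsqr_abs. apply sqrt_le_1_alt. unfold Rsqr. simpl. pose proof (pow2_ge_0 (x t1 - x t2)). simpl in H. lra.
  - apply Rle_trans with (1 := HL). apply Rmult_le_compat_r; [apply Rabs_pos| apply Rmax_l].
Qed.

Lemma y_cont : forall (y : R -> R) a0 b0 L t, 0 <= L ->
  (forall t1 t2, a0 <= t1 <= b0 -> a0 <= t2 <= b0 -> Rabs (y t1 - y t2) <= L * Rabs (t1 - t2)) ->
  a0 < t < b0 -> continuous y t.
Proof.
  intros y a0 b0 L t HL Hy Ht. apply cR_pt. apply continuity_pt_locally. intros eps.
  assert (Hd : 0 < Rmin (eps / (L + 1)) (Rmin (t - a0) (b0 - t))).
  { apply Rmin_glb_lt; [apply Rdiv_lt_0_compat; [destruct eps; simpl; lra| lra]| apply Rmin_glb_lt; lra]. }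
  exists (mkposreal _ Hd). intros t' Ht'. unfold ball in Ht'; simpl in Ht'. unfold AbsRing_ball, abs, minus, plus, opp in Ht'; simpl in Ht'.
  pose proof (Rmin_l (eps / (L + 1)) (Rmin (t - a0) (b0 - t))).
  pose proof (Rmin_r (eps / (L + 1)) (Rmin (t - a0) (b0 - t))).
  pose proof (Rmin_l (t - a0) (b0 - t)). pose proof (Rmin_r (t - a0) (b0 - t)).
  apply Rabs_def2 in Ht'. destruct Ht' as [K1 K2].
  assert (Hk : Rabs (y t' - y t) <= L * Rabs (t' - t)) by (apply Hy; lra).
  apply Rle_lt_trans with (1 := Hk).
  apply Rle_lt_trans with (L * (eps / (L + 1))).
  - apply Rmult_le_compat_l; auto. apply Rabs_le. lra.
  - destruct eps as [eps Heps]; simpl. apply Rlt_le_trans with ((L + 1) * (eps / (L + 1))).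
    + apply Rmult_lt_compat_r; [apply Rdiv_lt_0_compat; lra| lra].
    + right. field. lra.
Qed.

Lemma u_side : forall A0 m a0 b0 y u c d s t1 t2, in_P A0 m a0 b0 y 1 u ->
  a0 < c -> d < b0 -> (forall t, c <= t <= d -> 0 < y t) ->
  (forall t, c <= t <= d -> jump_set a0 b0 y u t -> t = s) ->
  c <= t1 -> t1 <= t2 -> t2 <= d -> (t2 < s \/ s < t1) -> u t1 = u t2.
Proof.
  intros A0 m a0 b0 y u c d s t1 t2 HP Ha Hb Hy Hj H1 H2 H3 H4.
  destruct HP as (_ & _ & HP & _). apply HP; try lra.
  intros t Ht. split; [apply Hy; lra|]. intro J. apply Hj in J; [|lra]. lra.
Qed.

Lemma Ch : forall (f : R -> R) a b c, ex_RInt f a b -> ex_RInt f b c -> RInt f a c = RInt f a b + RInt f b c.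
Proof. intros. symmetry. apply (RInt_Chasles (V:=R_CompleteNormedModule)); auto. Qed.

Lemma Wzf_cont : forall W z r, W_ok W -> continuous (Wzf W z) r.
Proof. intros. unfold Wzf. apply cR_comp; [apply cR_mult; [apply cR_const| apply cR_id]| apply W_cont; auto]. Qed.

Lemma PH_of : forall W z nu e, W_ok W -> 0 < nu -> 0 < e -> PH (Wzf W z) nu e.
Proof.
  intros W z nu e HW Hn He. split; [|split; [|split]]; auto.
  - intros; apply Wzf_cont; auto.
  - intros; unfold Wzf. destruct HW as (_ & H & _). apply H.
Qed.

Lemma trans_cont : forall W z nu e s t, W_ok W -> 0 < nu -> 0 < e ->
  continuous (fun t => z * (phi (Wzf W z) nu (Qi (Wzf W z) nu e s t) / e)) t.
Proof.
  intros. pose proof (PH_of W z nu e H H0 H1) as HP.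
  apply cR_mult; [apply cR_const|]. apply cR_mult; [|apply cR_const].
  apply cR_comp; [apply Qi_cont; auto| apply (phi_cont _ nu e); auto].
Qed.

Lemma ex_kG : forall W z nu e s al be lam c d (k : R -> R), W_ok W -> 0 < nu -> 0 < e ->
  c <= Tq (Wzf W z) nu e s (-1) -> Tq (Wzf W z) nu e s 1 <= d -> (forall r, continuous k r) ->
  ex_RInt (fun t => k (Gf W z nu e s al be lam t)) c d.
Proof.
  intros W z nu e s al be lam c d k HW Hn He A1 A2 Hk.
  pose proof (PH_of W z nu e HW Hn He) as HP.
  pose proof (p_bounds (Wzf W z) nu e s HP) as (B1 & _ & _).
  assert (Cb : forall t, continuous (fun t => k (lam * bd al be t)) t).
  { intros. apply cR_comp; auto. apply cR_mult; [apply cR_const| apply bd_cont]. }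
  refine (proj1 (pw2 _ (fun t => k (lam * bd al be t)) (fun t => k (Gf W z nu e s al be lam t)) c (Tq (Wzf W z) nu e s (-1)) d _ _ _ _ _)).
  { lra. }
  { intros t Ht. unfold Gf. rewrite G0_out by lra. f_equal. ring. }
  { intros t Ht. reflexivity. }
  { apply ex_contc; [lra|]. intros; auto. }
  refine (proj1 (pw2 _ (fun t => k (z * (phi (Wzf W z) nu (Qi (Wzf W z) nu e s t) / e) + lam * bd al be t))
     (fun t => k (lam * bd al be t)) (Tq (Wzf W z) nu e s (-1)) (Tq (Wzf W z) nu e s 1) d _ _ _ _ _)).
  { lra. }
  { intros t Ht. unfold Gf. rewrite G0_mid by lra. reflexivity. }
  { intros t Ht. unfold Gf. rewrite G0_out by lra. f_equal. ring. }
  - apply ex_contc; [lra|]. intros. apply cR_comp; auto. apply cR_plus; [apply trans_cont; auto|]. apply cR_mult; [apply cR_const| apply bd_cont].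
  - apply ex_contc; [lra|]. intros; auto.
Qed.

Lemma RInt_sub : forall (f g : R -> R) a b, ex_RInt f a b -> ex_RInt g a b ->
  RInt f a b - RInt g a b = RInt (fun t => f t - g t) a b.
Proof.
  intros. unfold Rminus. rewrite (RInt_extR (fun t => f t + - g t) (fun t => f t + (-1) * g t)) by (intros; ring).
  rewrite RInt_add; [| auto| apply ex_mulc; auto]. rewrite RInt_mulc by auto. ring.
Qed.

Lemma ex_sub : forall (f g : R -> R) a b, ex_RInt f a b -> ex_RInt g a b -> ex_RInt (fun t => f t - g t) a b.
Proof.
  intros. apply (ex_RInt_ext (fun t => f t + (-1) * g t)); [intros x _; replace (f x + -1 * g x) with (f x - g x) by ring; reflexivity|]. apply ex_add; auto. apply ex_mulc; auto.
Qed.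

Lemma U0_abs : forall W z nu e s t, (z = 1 \/ z = -1) -> Rabs (U0 W z nu e s t) <= 1.
Proof.
  intros. unfold U0. pose proof (clamp_rng (Qi (Wzf W z) nu e s t)). apply Rabs_le.
  destruct H; subst z; lra.
Qed.

Lemma ex_uy : forall (u y : R -> R) c d s z, c < s < d ->
  (forall t, c <= t <= d -> continuous y t) ->
  (forall t, c < t < s -> u t = - z) -> (forall t, s < t < d -> u t = z) ->
  ex_RInt (fun t => u t * y t) c d /\
  RInt (fun t => u t * y t) c d = RInt (fun t => - z * y t) c s + RInt (fun t => z * y t) s d.
Proof.
  intros u y c d s z Hs Hy H1 H2. apply pw2.
  - lra.
  - intros. rewrite H1; auto.
  - intros. rewrite H2; auto.
  - apply ex_contc; [lra|]. intros. apply cR_mult; [apply cR_const| apply Hy; lra].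
  - apply ex_contc; [lra|]. intros. apply cR_mult; [apply cR_const| apply Hy; lra].
Qed.

Lemma A_bnd : forall W z nu e s (u y : R -> R) c d Ymax, W_ok W -> 0 < nu -> 0 < e -> (z = 1 \/ z = -1) ->
  c <= Tq (Wzf W z) nu e s (-1) -> Tq (Wzf W z) nu e s 1 <= d ->
  (forall t, c <= t <= d -> continuous y t) -> (forall t, c <= t <= d -> 0 <= y t <= Ymax) ->
  (forall t, c < t < s -> u t = - z) -> (forall t, s < t < d -> u t = z) ->
  Rabs (RInt (fun t => U0 W z nu e s t * y t) c d - RInt (fun t => u t * y t) c d)
    <= 2 * Ymax * (Tq (Wzf W z) nu e s 1 - Tq (Wzf W z) nu e s (-1)).
Proof.
  intros W z nu e s u y c d Ymax HW Hn He Hz A1 A2 Hy Hyb H1 H2.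
  pose proof (PH_of W z nu e HW Hn He) as HP.
  pose proof (p_bounds (Wzf W z) nu e s HP) as (B1 & _ & _).
  set (p1 := Tq (Wzf W z) nu e s (-1)) in *. set (p2 := Tq (Wzf W z) nu e s 1) in *.
  set (f := fun t => U0 W z nu e s t * y t).
  assert (Ef : forall a b, c <= a -> a <= b -> b <= d -> ex_RInt f a b).
  { intros a b Ha Hab Hb. apply ex_contc; auto. intros. unfold f. apply cR_mult; [apply U0_cont; auto| apply Hy; lra]. }
  assert (Em : forall a b k, c <= a -> a <= b -> b <= d -> ex_RInt (fun t => k * y t) a b).
  { intros a b k Ha Hab Hb. apply ex_contc; auto. intros. apply cR_mult; [apply cR_const| apply Hy; lra]. }
  destruct (ex_uy u y c d s z ltac:(lra) Hy H1 H2) as [_ Eu]. rewrite Eu.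
  rewrite (Ch f c p1 d), (Ch f p1 s d), (Ch f s p2 d) by (apply Ef; lra).
  rewrite (Ch (fun t => - z * y t) c p1 s), (Ch (fun t => z * y t) s p2 d) by (apply Em; lra).
  assert (R1 : RInt f c p1 = RInt (fun t => - z * y t) c p1).
  { apply RInt_extR. intros t Ht. rewrite Rmin_left, Rmax_right in Ht by lra. unfold f. rewrite U0_lo; auto. unfold p1 in *; lra. }
  assert (R2 : RInt f p2 d = RInt (fun t => z * y t) p2 d).
  { apply RInt_extR. intros t Ht. rewrite Rmin_left, Rmax_right in Ht by lra. unfold f. rewrite U0_hi; auto. unfold p2 in *; lra. }
  rewrite R1, R2.
  replace (RInt (fun t => - z * y t) c p1 + (RInt f p1 s + (RInt f s p2 + RInt (fun t => z * y t) p2 d)) -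
     (RInt (fun t => - z * y t) c p1 + RInt (fun t => - z * y t) p1 s + (RInt (fun t => z * y t) s p2 + RInt (fun t => z * y t) p2 d)))
    with ((RInt f p1 s - RInt (fun t => - z * y t) p1 s) + (RInt f s p2 - RInt (fun t => z * y t) s p2)) by ring.
  rewrite !RInt_sub by (try apply Ef; try apply Em; lra).
  apply Rle_trans with (Rabs (RInt (fun t => f t - - z * y t) p1 s) + Rabs (RInt (fun t => f t - z * y t) s p2)); [apply Rabs_triang|].
  assert (Bd : forall t k, c <= t <= d -> Rabs k <= 1 -> Rabs (f t - k * y t) <= 2 * Ymax).
  { intros t k Ht Hk. unfold f. replace (U0 W z nu e s t * y t - k * y t) with ((U0 W z nu e s t - k) * y t) by ring.
    rewrite Rabs_mult. specialize (Hyb t Ht). rewrite (Rabs_right (y t)) by lra.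
    apply Rmult_le_compat; try lra; try apply Rabs_pos.
    apply Rle_trans with (Rabs (U0 W z nu e s t) + Rabs k); [unfold Rminus; rewrite <- (Rabs_Ropp k); apply Rabs_triang|].
    pose proof (U0_abs W z nu e s t Hz). lra. }
  assert (Hz1 : Rabs z <= 1) by (destruct Hz; subst; rewrite ?Rabs_R1, ?Rabs_m1; lra).
  assert (Hz2 : Rabs (- z) <= 1) by (rewrite Rabs_Ropp; auto).
  assert (X1 : Rabs (RInt (fun t => f t - - z * y t) p1 s) <= 2 * Ymax * (s - p1)).
  { apply RInt_abs_bound; [lra| |].
    - apply ex_sub; [apply Ef| apply Em]; lra.
    - intros t Ht. apply Bd; auto; lra. }
  assert (X2 : Rabs (RInt (fun t => f t - z * y t) s p2) <= 2 * Ymax * (p2 - s)).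
  { apply RInt_abs_bound; [lra| |].
    - apply ex_sub; [apply Ef| apply Em]; lra.
    - intros t Ht. apply Bd; auto; lra. }
  lra.
Qed.

Lemma sqrt_sum_le : forall w n, 0 <= w -> 0 <= n -> sqrt (w + n ^ 2) <= sqrt w + n.
Proof.
  intros w n Hw Hn. rewrite <- (sqrt_pow2 (sqrt w + n)) by (pose proof (sqrt_pos w); lra).
  apply sqrt_le_1_alt. pose proof (sqrt_pos w). pose proof (pow2_sqrt w Hw).
  replace ((sqrt w + n) ^ 2) with (sqrt w ^ 2 + 2 * n * sqrt w + n ^ 2) by ring. nra.
Qed.

Lemma prof_bound : forall w n e, 0 <= w -> 0 < n -> 0 < e ->
  e * / sqrt (w + n ^ 2) * ((sqrt (w + n ^ 2) ^ 2 + w) / e) <= 2 * sqrt w + 2 * n.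
Proof.
  intros w n e Hw Hn He. set (p := sqrt (w + n ^ 2)).
  assert (Hp : 0 < p) by (unfold p; apply sqrt_lt_R0; nra).
  assert (Hp2 : p ^ 2 = w + n ^ 2) by (unfold p; apply pow2_sqrt; nra).
  replace (e * / p * ((p ^ 2 + w) / e)) with ((p ^ 2 + w) / p) by (field; lra).
  apply Rle_trans with (2 * p).
  - apply (Rmult_le_reg_r p); [lra|]. unfold Rdiv. rewrite Rmult_assoc, Rinv_l, Rmult_1_r by lra. nra.
  - pose proof (sqrt_sum_le w n Hw (Rlt_le _ _ Hn)). fold p in H. lra.
Qed.

Definition Hq W z nu e (r : R) : R := (phi (Wzf W z) nu r ^ 2 + Wzf W z (clamp r)) / e.

Lemma Hq_cont : forall W z nu e r, W_ok W -> 0 < nu -> 0 < e -> continuous (Hq W z nu e) r.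
Proof.
  intros. pose proof (PH_of W z nu e H H0 H1) as HP. unfold Hq.
  apply cR_mult; [|apply cR_const]. apply cR_plus.
  - apply cR_pow2. apply (phi_cont _ nu e); auto.
  - apply cR_comp; [apply clamp_cont| apply Wzf_cont; auto].
Qed.

Lemma Hq_nonneg : forall W z nu e r, W_ok W -> 0 < e -> 0 <= Hq W z nu e r.
Proof.
  intros. unfold Hq. apply Rmult_le_pos; [|left; apply Rinv_0_lt_compat; auto].
  pose proof (pow2_ge_0 (phi (Wzf W z) nu r)). change (Wzf W z (clamp r)) with (W (z * clamp r)). destruct H as (_ & Hp & _). specialize (Hp (z * clamp r)). lra.
Qed.

Lemma tr_int : forall W z nu e s sigma, W_ok W -> 0 < nu -> 0 < e ->
  RInt (fun r => sqrt (W (z * r))) (-1) 1 = sigma / 2 ->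
  ex_RInt (fun t => Hq W z nu e (Qi (Wzf W z) nu e s t)) (Tq (Wzf W z) nu e s (-1)) (Tq (Wzf W z) nu e s 1) /\
  RInt (fun t => Hq W z nu e (Qi (Wzf W z) nu e s t)) (Tq (Wzf W z) nu e s (-1)) (Tq (Wzf W z) nu e s 1) <= sigma + 4 * nu.
Proof.
  intros W z nu e s sigma HW Hn He Hsig. pose proof (PH_of W z nu e HW Hn He) as HP.
  destruct (CoV (Wzf W z) nu e s (Hq W z nu e) (-1) 1 HP (fun r => Hq_cont W z nu e r HW Hn He)) as [E1 E2].
  split; auto. rewrite E2.
  assert (Ex2 : ex_RInt (fun r => sqrt (W (z * r))) (-1) 1) by (apply ex_contc; [lra|]; intros; apply sqrtW_cont; auto).
  apply Rle_trans with (RInt (fun r => 2 * sqrt (W (z * r)) + 2 * nu) (-1) 1).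
  - apply RInt_le; [lra| | |].
    + apply ex_contc; [lra|]. intros. apply cR_mult; [apply cR_mult; [apply cR_const| apply (iphi_cont _ nu e); auto]| apply Hq_cont; auto].
    + apply ex_add; [apply ex_mulc; auto| apply ex_cst].
    + intros r Hr. unfold Hq, phi. rewrite clamp_id by lra. apply prof_bound; auto.
      unfold Wzf. destruct HW as (_ & Hp & _). apply Hp.
  - rewrite RInt_add; [| apply ex_mulc; auto| apply ex_cst]. rewrite RInt_mulc by auto. rewrite RInt_cst, Hsig. lra.
Qed.

Lemma W_wells : forall W z, W_ok W -> (z = 1 \/ z = -1) -> W z = 0 /\ W (- z) = 0.
Proof.
  intros W z HW Hz. destruct HW as (_ & _ & H & _). split; apply H; destruct Hz; subst; lra.
Qed.

Lemma E_bnd : forall W z nu e s al be lam c d sigma (y : R -> R) Ymax L rho K2,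
  W_ok W -> 0 < nu -> 0 < e -> (z = 1 \/ z = -1) -> RInt (fun r => sqrt (W (z * r))) (-1) 1 = sigma / 2 ->
  c <= Tq (Wzf W z) nu e s (-1) -> Tq (Wzf W z) nu e s 1 <= al -> al < be -> be <= d ->
  (forall t, c <= t <= d -> continuous y t) -> (forall t, c <= t <= d -> 0 <= y t <= Ymax) ->
  0 <= L -> (forall t, c <= t <= d -> y t <= y s + L * Rabs (t - s)) ->
  0 <= K2 -> (forall h, Rabs h <= rho -> W (z + h) <= K2 * h ^ 2) ->
  Rabs lam * (((be - al) ^ 2 / 4) ^ 2) <= rho ->
  ex_RInt (fun t => (e * Gf W z nu e s al be lam t ^ 2 + W (Uf W z nu e s al be lam t) / e) * y t) c d /\
  RInt (fun t => (e * Gf W z nu e s al be lam t ^ 2 + W (Uf W z nu e s al be lam t) / e) * y t) c d <=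
    (y s + L * (e / nu)) * (sigma + 4 * nu) +
    (Ymax * (e * lam ^ 2 * (2 * ((be - al) ^ 2 / 4) * (be - al)) ^ 2 + K2 * (lam * ((be - al) ^ 2 / 4) ^ 2) ^ 2 / e)) * (be - al).
Proof.
  intros W z nu e s al be lam c d sigma y Ymax L rho K2 HW Hn He Hz Hsig A1 A2 A3 A4 Hy Hyb HL Hlip HK2 Htay Hlam.
  pose proof (PH_of W z nu e HW Hn He) as HP.
  pose proof (p_bounds (Wzf W z) nu e s HP) as (B1 & B2 & B3).
  destruct (W_wells W z HW Hz) as [Wz0 Wmz0].
  assert (z2 : z * z = 1) by (destruct Hz; subst; ring).
  set (F := fun t => (e * Gf W z nu e s al be lam t ^ 2 + W (Uf W z nu e s al be lam t) / e) * y t).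
  set (Htr := fun t => Hq W z nu e (Qi (Wzf W z) nu e s t) * y t).
  set (Bb := ((be - al) ^ 2 / 4) ^ 2). set (Bd := 2 * ((be - al) ^ 2 / 4) * (be - al)).
  set (Hb := fun t => (e * (lam * (2 * ((t - al) * (be - t)) * (al + be - 2 * t))) ^ 2 + W (z + lam * ((t - al) * (be - t)) ^ 2) / e) * y t).
  assert (Fz1 : forall t, c < t < Tq (Wzf W z) nu e s (-1) -> F t = 0).
  { intros t Ht. unfold F, Gf, Uf. rewrite G0_out by lra. rewrite U0_lo by (auto; lra).
    rewrite (bdL al be t), (bmpL al be t) by lra. replace (- z + lam * 0) with (- z) by ring. rewrite Wmz0. unfold Rdiv. ring. }
  assert (Fz2 : forall t, Tq (Wzf W z) nu e s 1 < t < al -> F t = 0).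
  { intros t Ht. unfold F, Gf, Uf. rewrite G0_out by lra. rewrite U0_hi by (auto; lra).
    rewrite (bdL al be t), (bmpL al be t) by lra. replace (z + lam * 0) with z by ring. rewrite Wz0. unfold Rdiv. ring. }
  assert (Fz3 : forall t, be < t < d -> F t = 0).
  { intros t Ht. unfold F, Gf, Uf. rewrite G0_out by lra. rewrite U0_hi by (auto; lra).
    rewrite (bdR al be t), (bmpR al be t) by lra. replace (z + lam * 0) with z by ring. rewrite Wz0. unfold Rdiv. ring. }
  assert (Ftr : forall t, Tq (Wzf W z) nu e s (-1) < t < Tq (Wzf W z) nu e s 1 -> F t = Htr t).
  { intros t Ht. unfold F, Htr, Gf, Uf, Hq. rewrite G0_mid by lra. rewrite U0_mid by (auto; lra).
    rewrite (bdL al be t), (bmpL al be t) by lra. rewrite Rmult_0_r, !Rplus_0_r.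
    rewrite (clamp_id (Qi (Wzf W z) nu e s t)) by (apply Qi_mid; auto; lra).
    set (Q := Qi (Wzf W z) nu e s t). set (P := phi (Wzf W z) nu Q).
    replace (e * (z * (P / e)) ^ 2) with ((z * z) * P ^ 2 / e) by (field; lra). rewrite z2.
    change (Wzf W z Q) with (W (z * Q)). field. lra. }
  assert (Fb : forall t, al < t < be -> F t = Hb t).
  { intros t Ht. unfold F, Hb, Gf, Uf. rewrite G0_out by lra. rewrite U0_hi by (auto; lra).
    rewrite (bdI al be t), (bmpI al be t) by lra. rewrite Rplus_0_l. reflexivity. }
  assert (CHb : forall t, c <= t <= d -> continuous Hb t).
  { intros t Ht. unfold Hb. apply cR_mult; [|apply Hy; auto]. apply cR_plus.
    - apply cR_mult; [apply cR_const|]. apply cR_pow2. apply cR_mult; [apply cR_const|].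
      apply cR_mult; [apply cR_mult; [apply cR_const| apply prod_cont]|].
      apply cR_minus; [apply cR_const| apply cR_mult; [apply cR_const| apply cR_id]].
    - apply cR_mult; [|apply cR_const]. apply cR_comp; [|apply W_cont; auto].
      apply cR_plus; [apply cR_const|]. apply cR_mult; [apply cR_const|]. apply cR_pow2. apply prod_cont. }
  assert (CHtr : forall t, c <= t <= d -> continuous Htr t).
  { intros t Ht. unfold Htr. apply cR_mult; [|apply Hy; auto]. apply cR_comp; [apply Qi_cont; auto| apply Hq_cont; auto]. }
  destruct (pw2 F Hb (fun _ => 0) al be d ltac:(lra) Fb Fz3) as [S1e S1].
  { apply ex_contc; [lra|]. intros; apply CHb; lra. }
  { apply ex_cst. }
  destruct (pw2 F (fun _ => 0) F (Tq (Wzf W z) nu e s 1) al d ltac:(lra) Fz2 (fun _ _ => eq_refl) (ex_cst _ _ 0) S1e) as [S2e S2].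
  destruct (pw2 F Htr F (Tq (Wzf W z) nu e s (-1)) (Tq (Wzf W z) nu e s 1) d ltac:(lra) Ftr (fun _ _ => eq_refl)) as [S3e S3].
  { apply ex_contc; [lra|]. intros; apply CHtr; lra. }
  { exact S2e. }
  destruct (pw2 F (fun _ => 0) F c (Tq (Wzf W z) nu e s (-1)) d ltac:(lra) Fz1 (fun _ _ => eq_refl) (ex_cst _ _ 0) S3e) as [S4e S4].
  split; [exact S4e|].
  rewrite S4, S3, S2, S1, !RInt_zero.
  assert (Hys : 0 <= y s) by (apply Hyb; lra).
  assert (T1 : RInt Htr (Tq (Wzf W z) nu e s (-1)) (Tq (Wzf W z) nu e s 1) <= (y s + L * (e / nu)) * (sigma + 4 * nu)).
  { destruct (tr_int W z nu e s sigma HW Hn He Hsig) as [I1 I2].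
    apply Rle_trans with (RInt (fun t => (y s + L * (e / nu)) * Hq W z nu e (Qi (Wzf W z) nu e s t)) (Tq (Wzf W z) nu e s (-1)) (Tq (Wzf W z) nu e s 1)).
    - apply RInt_le; [lra| apply ex_contc; [lra|]; intros; apply CHtr; lra| apply ex_mulc; auto|].
      intros t Ht. unfold Htr. rewrite Rmult_comm. apply Rmult_le_compat_r; [apply Hq_nonneg; auto|].
      apply Rle_trans with (y s + L * Rabs (t - s)); [apply Hlip; lra|].
      apply Rplus_le_compat_l. apply Rmult_le_compat_l; auto. apply Rabs_le. lra.
    - rewrite RInt_mulc by auto. apply Rmult_le_compat_l; auto.
      apply Rplus_le_le_0_compat; auto. apply Rmult_le_pos; auto. apply Rlt_le, Rdiv_lt_0_compat; auto. }
  assert (T2 : RInt Hb al be <= (Ymax * (e * lam ^ 2 * Bd ^ 2 + K2 * (lam * Bb) ^ 2 / e)) * (be - al)).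
  { apply RInt_bound; [lra| apply ex_contc; [lra|]; intros; apply CHb; lra|].
    intros t Ht. unfold Hb.
    set (q := (t - al) * (be - t)).
    assert (Hq0 : 0 <= q) by (unfold q; nra).
    assert (Hbp : q ^ 2 <= Bb).
    { pose proof (bmp_bnd al be t A3) as [_ X]. rewrite (bmpI al be t) in X by lra. exact X. }
    assert (Hbdp : Rabs (2 * q * (al + be - 2 * t)) <= Bd).
    { pose proof (bd_bnd al be t A3) as X. rewrite (bdI al be t) in X by lra. exact X. }
    assert (HX : (lam * (2 * q * (al + be - 2 * t))) ^ 2 <= lam ^ 2 * Bd ^ 2).
    { rewrite Rpow_mult_distr. apply Rmult_le_compat_l; [apply pow2_ge_0|]. apply pow_maj_Rabs; auto. }
    assert (Hr : Rabs (lam * q ^ 2) <= rho).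
    { rewrite Rabs_mult, (Rabs_right (q ^ 2)) by (apply Rle_ge, pow2_ge_0).
      apply Rle_trans with (2 := Hlam). apply Rmult_le_compat_l; [apply Rabs_pos| auto]. }
    assert (HW2 : W (z + lam * q ^ 2) <= K2 * (lam * Bb) ^ 2).
    { apply Rle_trans with (K2 * (lam * q ^ 2) ^ 2); [apply Htay; auto|].
      apply Rmult_le_compat_l; auto. rewrite <- (pow2_abs (lam * Bb)). apply pow_maj_Rabs.
      rewrite Rabs_mult, Rabs_mult, (Rabs_right (q ^ 2)) by (apply Rle_ge, pow2_ge_0).
      rewrite (Rabs_right Bb) by (unfold Bb; apply Rle_ge, pow2_ge_0).
      apply Rmult_le_compat_l; [apply Rabs_pos| auto]. }
    assert (HW0 : 0 <= W (z + lam * q ^ 2)) by (destruct HW as (_ & Hp & _); apply Hp).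
    pose proof (pow2_ge_0 (lam * (2 * q * (al + be - 2 * t)))).
    specialize (Hyb t ltac:(lra)).
    assert (Hsum : 0 <= e * (lam * (2 * q * (al + be - 2 * t))) ^ 2 + W (z + lam * q ^ 2) / e).
    { apply Rplus_le_le_0_compat; [apply Rmult_le_pos; lra| apply Rmult_le_pos; [lra| left; apply Rinv_0_lt_compat; lra]]. }
    assert (Hsum2 : e * (lam * (2 * q * (al + be - 2 * t))) ^ 2 + W (z + lam * q ^ 2) / e <=
                    e * lam ^ 2 * Bd ^ 2 + K2 * (lam * Bb) ^ 2 / e).
    { replace (e * lam ^ 2 * Bd ^ 2) with (e * (lam ^ 2 * Bd ^ 2)) by ring. apply Rplus_le_compat; [apply Rmult_le_compat_l; lra|].
      unfold Rdiv. apply Rmult_le_compat_r; [left; apply Rinv_0_lt_compat; lra| auto]. }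
    rewrite (Rmult_comm Ymax). apply Rmult_le_compat; lra. }
  lra.
Qed.

Lemma L1_bnd : forall W z nu e s al be lam c d (u : R -> R),
  W_ok W -> 0 < nu -> 0 < e -> (z = 1 \/ z = -1) ->
  c <= Tq (Wzf W z) nu e s (-1) -> Tq (Wzf W z) nu e s 1 <= al -> al < be -> be <= d ->
  (forall t, c < t < s -> u t = - z) -> (forall t, s < t < d -> u t = z) ->
  ex_RInt (fun t => Rabs (Uf W z nu e s al be lam t - u t)) c d /\
  RInt (fun t => Rabs (Uf W z nu e s al be lam t - u t)) c d <=
    2 * (Tq (Wzf W z) nu e s 1 - Tq (Wzf W z) nu e s (-1)) + Rabs lam * ((be - al) ^ 2 / 4) ^ 2 * (be - al).
Proof.
  intros W z nu e s al be lam c d u HW Hn He Hz A1 A2 A3 A4 Hu1 Hu2.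
  pose proof (PH_of W z nu e HW Hn He) as HP.
  pose proof (p_bounds (Wzf W z) nu e s HP) as (B1 & B2 & B3).
  set (F := fun t => Rabs (Uf W z nu e s al be lam t - u t)).
  set (g1 := fun t => Rabs (U0 W z nu e s t + z)).
  set (g2 := fun t => Rabs (U0 W z nu e s t - z)).
  set (g3 := fun t => Rabs (lam * bmp al be t)).
  assert (C1 : forall t, continuous g1 t) by (intros; unfold g1; apply cR_abs; apply cR_plus; [apply U0_cont; auto| apply cR_const]).
  assert (C2 : forall t, continuous g2 t) by (intros; unfold g2; apply cR_abs; apply cR_minus; [apply U0_cont; auto| apply cR_const]).
  assert (C3 : forall t, continuous g3 t) by (intros; unfold g3; apply cR_abs; apply cR_mult; [apply cR_const| apply bmp_cont]).
  destruct (pw2 F g3 (fun _ => 0) al be d) as [S1e S1].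
  { lra. }
  { intros t Ht. unfold F, g3, Uf. rewrite U0_hi by (auto; lra). rewrite Hu2 by lra. f_equal. ring. }
  { intros t Ht. unfold F, Uf. rewrite U0_hi by (auto; lra). rewrite Hu2 by lra. rewrite (bmpR al be t) by lra.
    replace (z + lam * 0 - z) with 0 by ring. apply Rabs_R0. }
  { apply ex_contc; [lra| intros; auto]. }
  { apply ex_cst. }
  destruct (pw2 F (fun _ => 0) F (Tq (Wzf W z) nu e s 1) al d) as [S2e S2]; auto.
  { lra. }
  { intros t Ht. unfold F, Uf. rewrite U0_hi by (auto; lra). rewrite Hu2 by lra. rewrite (bmpL al be t) by lra.
    replace (z + lam * 0 - z) with 0 by ring. apply Rabs_R0. }
  { apply ex_cst. }
  destruct (pw2 F g2 F s (Tq (Wzf W z) nu e s 1) d) as [S3e S3]; auto.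
  { lra. }
  { intros t Ht. unfold F, g2, Uf. rewrite Hu2 by lra. rewrite (bmpL al be t) by lra. f_equal. ring. }
  { apply ex_contc; [lra| intros; auto]. }
  destruct (pw2 F g1 F (Tq (Wzf W z) nu e s (-1)) s d) as [S4e S4]; auto.
  { lra. }
  { intros t Ht. unfold F, g1, Uf. rewrite Hu1 by lra. rewrite (bmpL al be t) by lra. f_equal. ring. }
  { apply ex_contc; [lra| intros; auto]. }
  destruct (pw2 F (fun _ => 0) F c (Tq (Wzf W z) nu e s (-1)) d) as [S5e S5]; auto.
  { lra. }
  { intros t Ht. unfold F, Uf. rewrite U0_lo by (auto; lra). rewrite Hu1 by lra. rewrite (bmpL al be t) by lra.
    replace (- z + lam * 0 - - z) with 0 by ring. apply Rabs_R0. }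
  { apply ex_cst. }
  split; auto.
  rewrite S5, S4, S3, S2, S1, !RInt_zero.
  assert (Hz1 : Rabs z = 1) by (destruct Hz; subst; rewrite ?Rabs_R1, ?Rabs_m1; lra).
  assert (X1 : RInt g1 (Tq (Wzf W z) nu e s (-1)) s <= 2 * (s - Tq (Wzf W z) nu e s (-1))).
  { apply RInt_bound; [lra| apply ex_contc; [lra| intros; auto]|]. intros t _. unfold g1.
    apply Rle_trans with (Rabs (U0 W z nu e s t) + Rabs z); [apply Rabs_triang|]. pose proof (U0_abs W z nu e s t Hz). lra. }
  assert (X2 : RInt g2 s (Tq (Wzf W z) nu e s 1) <= 2 * (Tq (Wzf W z) nu e s 1 - s)).
  { apply RInt_bound; [lra| apply ex_contc; [lra| intros; auto]|]. intros t _. unfold g2.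
    apply Rle_trans with (Rabs (U0 W z nu e s t) + Rabs (- z)); [unfold Rminus; apply Rabs_triang|].
    rewrite Rabs_Ropp. pose proof (U0_abs W z nu e s t Hz). lra. }
  assert (X3 : RInt g3 al be <= Rabs lam * ((be - al) ^ 2 / 4) ^ 2 * (be - al)).
  { apply RInt_bound; [lra| apply ex_contc; [lra| intros; auto]|]. intros t _. unfold g3.
    rewrite Rabs_mult. pose proof (bmp_bnd al be t A3). rewrite (Rabs_right (bmp al be t)) by lra.
    apply Rmult_le_compat_l; [apply Rabs_pos| lra]. }
  lra.
Qed.

Lemma B_pos : forall al be c d (y : R -> R), c <= al -> al < be -> be <= d ->
  (forall t, c <= t <= d -> continuous y t) -> (forall t, c <= t <= d -> 0 < y t) ->
  ex_RInt (fun t => bmp al be t * y t) c d /\ 0 < RInt (fun t => bmp al be t * y t) c d.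
Proof.
  intros al be c d y A1 A2 A3 Hy Hyp.
  assert (E : ex_RInt (fun t => bmp al be t * y t) c d).
  { apply ex_contc; [lra|]. intros. apply cR_mult; [apply bmp_cont| apply Hy; auto]. }
  split; auto.
  assert (Ea : forall a b, c <= a -> a <= b -> b <= d -> ex_RInt (fun t => bmp al be t * y t) a b).
  { intros a b Ha Hab Hb. apply ex_contc; auto. intros. apply cR_mult; [apply bmp_cont| apply Hy; lra]. }
  rewrite (Ch _ c al d), (Ch _ al be d) by (apply Ea; lra).
  assert (Z1 : RInt (fun t => bmp al be t * y t) c al = 0).
  { rewrite <- (RInt_zero c al). apply RInt_extR. intros t Ht. rewrite Rmin_left, Rmax_right in Ht by lra.
    rewrite (bmpL al be t) by lra. ring. }
  assert (Z2 : RInt (fun t => bmp al be t * y t) be d = 0).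
  { rewrite <- (RInt_zero be d). apply RInt_extR. intros t Ht. rewrite Rmin_left, Rmax_right in Ht by lra.
    rewrite (bmpR al be t) by lra. ring. }
  rewrite Z1, Z2.
  assert (0 < RInt (fun t => bmp al be t * y t) al be).
  { apply RInt_gt_0; auto.
    - intros t Ht. rewrite (bmpI al be t) by lra. apply Rmult_lt_0_compat; [|apply Hyp; lra].
      apply pow_lt. nra.
    - intros. apply cR_mult; [apply bmp_cont| apply Hy; lra]. }
  lra.
Qed.

Lemma nu_facts : forall e d0, 0 < d0 -> 0 < e < d0 ^ 4 ->
  0 < sqrt (sqrt e) /\ sqrt (sqrt e) < d0 /\ sqrt (sqrt e) ^ 4 = e.
Proof.
  intros e d0 Hd He.
  assert (E4 : sqrt (sqrt e) ^ 4 = e).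
  { replace 4%nat with (2 * 2)%nat by reflexivity. rewrite pow_mult.
    rewrite pow2_sqrt by (apply sqrt_pos). rewrite pow2_sqrt; lra. }
  assert (P : 0 < sqrt (sqrt e)) by (apply sqrt_lt_R0, sqrt_lt_R0; lra).
  split; auto. split; auto.
  apply Rnot_le_lt. intro Hle. assert (d0 ^ 4 <= sqrt (sqrt e) ^ 4) by (apply pow_incr; lra). lra.
Qed.

Lemma pow_le_self : forall v n, 0 < v <= 1 -> (1 <= n)%nat -> v ^ n <= v.
Proof.
  intros v n Hv Hn. induction n as [|n IH]; [lia|].
  destruct n as [|n]; [simpl; lra|].
  assert (v ^ S n <= v) by (apply IH; lia).
  simpl in *. assert (0 <= v * v ^ n) by (apply Rmult_le_pos; [lra| apply pow_le; lra]). nra.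
Qed.

Lemma main_case : forall C0 W sigma (y u : R -> R) c d s z L Ymax,
  1 < C0 -> W_ok W -> (z = 1 \/ z = -1) ->
  RInt (fun r => sqrt (W (z * r))) (-1) 1 = sigma / 2 -> 0 <= sigma -> c < s < d ->
  (forall t, c <= t <= d -> continuous y t) -> (forall t, c <= t <= d -> 0 < y t) ->
  (forall t, c <= t <= d -> y t <= Ymax) ->
  0 <= L -> (forall t, c <= t <= d -> y t <= y s + L * Rabs (t - s)) ->
  (forall t, c < t < s -> u t = - z) -> (forall t, s < t < d -> u t = z) ->
  Concl C0 W sigma y u c d s.
Proof.
  intros C0 W sigma y u c d s z L Ymax HC0 HW Hz Hsig Hsig0 Hs Hy Hyp HyM HL Hlip Hu1 Hu2.
  set (al := s + (d - s) / 3). set (be := s + 2 * (d - s) / 3).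
  assert (Hab : s < al /\ al < be /\ be < d) by (unfold al, be; lra).
  destruct (W_quad W z HW Hz) as [rho [K2 [Hrho [HK2 Htay]]]].
  destruct (B_pos al be c d y ltac:(lra) ltac:(lra) ltac:(lra) Hy Hyp) as [EB HB].
  set (B := RInt (fun t => bmp al be t * y t) c d) in *.
  set (Bb := ((be - al) ^ 2 / 4) ^ 2).
  assert (HBb : 0 < Bb) by (unfold Bb; apply pow_lt; apply Rdiv_lt_0_compat; [apply pow_lt|]; lra).
  assert (HYm : 0 < Ymax) by (pose proof (Hyp s ltac:(lra)); pose proof (HyM s ltac:(lra)); lra).
  assert (Hyb : forall t, c <= t <= d -> 0 <= y t <= Ymax) by (intros t Ht; split; [left; apply Hyp; auto| apply HyM; auto]).
  set (Kl := 4 * Ymax / B).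
  assert (HKl : 0 < Kl) by (unfold Kl; apply Rdiv_lt_0_compat; lra).
  set (nuf := fun e : R => sqrt (sqrt e)).
  set (lamf := fun e : R => - (RInt (fun t => U0 W z (nuf e) e s t * y t) c d - RInt (fun t => u t * y t) c d) / B).
  set (nu0 := Rmin 1 (Rmin ((s - c) / 2) (Rmin ((al - s) / 2) (Rmin ((C0 - 1) / (Kl * Bb + 1)) (rho / (Kl * Bb + 1)))))).
  assert (HKB : 0 < Kl * Bb + 1) by (pose proof (Rmult_lt_0_compat _ _ HKl HBb); lra).
  assert (Hnu0 : 0 < nu0 /\ nu0 <= 1 /\ nu0 <= (s - c) / 2 /\ nu0 <= (al - s) / 2 /\
                 nu0 <= (C0 - 1) / (Kl * Bb + 1) /\ nu0 <= rho / (Kl * Bb + 1)).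
  { unfold nu0. repeat split.
    - repeat (apply Rmin_glb_lt); try lra; apply Rdiv_lt_0_compat; lra.
    - apply Rmin_l.
    - eapply Rle_trans; [apply Rmin_r| apply Rmin_l].
    - eapply Rle_trans; [apply Rmin_r|]. eapply Rle_trans; [apply Rmin_r| apply Rmin_l].
    - eapply Rle_trans; [apply Rmin_r|]. eapply Rle_trans; [apply Rmin_r|]. eapply Rle_trans; [apply Rmin_r| apply Rmin_l].
    - eapply Rle_trans; [apply Rmin_r|]. eapply Rle_trans; [apply Rmin_r|]. eapply Rle_trans; [apply Rmin_r| apply Rmin_r]. }
  destruct Hnu0 as (N0 & N1 & N2 & N3 & N4 & N5).
  assert (PE : forall e, 0 < e < nu0 ^ 4 ->
    0 < nuf e /\ nuf e < nu0 /\ nuf e ^ 4 = e /\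
    c < Tq (Wzf W z) (nuf e) e s (-1) /\ Tq (Wzf W z) (nuf e) e s 1 < al /\
    Tq (Wzf W z) (nuf e) e s 1 - Tq (Wzf W z) (nuf e) e s (-1) <= 2 * nuf e ^ 3 /\
    Rabs (lamf e) <= Kl * nuf e ^ 3).
  { intros e He. destruct (nu_facts e nu0 N0 He) as (V1 & V2 & V3). fold (nuf e) in V1, V2, V3.
    pose proof (PH_of W z (nuf e) e HW V1 ltac:(lra)) as HP.
    pose proof (p_bounds (Wzf W z) (nuf e) e s HP) as (B1 & B2 & B3).
    assert (Env : e / nuf e = nuf e ^ 3).
    { transitivity (nuf e ^ 4 / nuf e); [rewrite V3; reflexivity|]. field. lra. }
    assert (H3 : nuf e ^ 3 <= nuf e) by (apply pow_le_self; [lra| lia]).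
    rewrite Env in B2, B3.
    do 3 (split; auto). split; [lra|]. split; [lra|]. split; [lra|].
    unfold lamf. unfold Rdiv. rewrite Rabs_mult, Rabs_Ropp, Rabs_Rinv by lra. rewrite (Rabs_right B) by lra.
    pose proof (A_bnd W z (nuf e) e s u y c d Ymax HW V1 ltac:(lra) Hz ltac:(lra) ltac:(lra) Hy Hyb Hu1 Hu2) as HA.
    unfold Kl. apply Rle_trans with (2 * Ymax * (2 * nuf e ^ 3) * / B).
    - apply Rmult_le_compat_r; [left; apply Rinv_0_lt_compat; lra|]. eapply Rle_trans; [exact HA|].
      apply Rmult_le_compat_l; lra.
    - right. field. lra. }
  exists (nu0 ^ 4). split; [apply pow_lt; lra|].
  exists (fun e => Uf W z (nuf e) e s al be (lamf e)), (fun e => Gf W z (nuf e) e s al be (lamf e)).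
  assert (LB : forall e, 0 < e < nu0 ^ 4 -> Rabs (lamf e) * Bb <= (Kl * Bb + 1) * nu0).
  { intros e He. destruct (PE e He) as (V1 & V2 & V3 & Q1 & Q2 & Q3 & Q4).
    assert (H3 : nuf e ^ 3 <= nuf e) by (apply pow_le_self; [lra| lia]).
    apply Rle_trans with (Kl * nuf e ^ 3 * Bb); [apply Rmult_le_compat_r; lra|].
    apply Rle_trans with (Kl * nu0 * Bb).
    - apply Rmult_le_compat_r; [lra|]. apply Rmult_le_compat_l; lra.
    - nra. }
  assert (HL1 : (Kl * Bb + 1) * nu0 <= C0 - 1).
  { apply Rmult_le_reg_r with (/ (Kl * Bb + 1)); [apply Rinv_0_lt_compat; lra|].
    replace ((Kl * Bb + 1) * nu0 * / (Kl * Bb + 1)) with nu0 by (field; lra). exact N4. }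
  assert (HL2 : (Kl * Bb + 1) * nu0 <= rho).
  { apply Rmult_le_reg_r with (/ (Kl * Bb + 1)); [apply Rinv_0_lt_compat; lra|].
    replace ((Kl * Bb + 1) * nu0 * / (Kl * Bb + 1)) with nu0 by (field; lra). exact N5. }
  split; [|split].
  - intros e He. destruct (PE e He) as (V1 & V2 & V3 & Q1 & Q2 & Q3 & Q4).
    pose proof (PH_of W z (nuf e) e HW V1 ltac:(lra)) as HP.
    pose proof (p_bounds (Wzf W z) (nuf e) e s HP) as (B1 & B2 & B3).
    pose proof (LB e He) as LBe.
    split; [|split; [|split]].
    + unfold W12. split; [|split; [|split; [|split]]].
      * apply Lint_ex; [lra|]. apply ex_contc; [lra|]. intros; apply Uf_cont; auto.
      * apply Lint_ex; [lra|]. apply ex_contc; [lra|]. intros; apply cR_pow2; apply Uf_cont; auto.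
      * apply Lint_ex; [lra|].
        exact (ex_kG W z (nuf e) e s al be (lamf e) c d (fun x => x) HW V1 ltac:(lra) ltac:(lra) ltac:(lra) (fun r => cR_id r)).
      * apply Lint_ex; [lra|].
        exact (ex_kG W z (nuf e) e s al be (lamf e) c d (fun x => x ^ 2) HW V1 ltac:(lra) ltac:(lra) ltac:(lra) (fun r => cR_pow2 _ r (cR_id r))).
      * intros t1 t2 H1 H2 H3. apply RInt_HK; auto.
        apply (FT_all W z (nuf e) e s al be (lamf e) c d HP); lra.
    + exists (Tq (Wzf W z) (nuf e) e s (-1)), be. split; [lra|]. split; [lra|]. split; [lra|].
      intros t Ht [Hlt|Hgt].
      * unfold Uf. rewrite U0_lo by (auto; lra). rewrite (bmpL al be t) by lra. rewrite Hu1 by lra. ring.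
      * unfold Uf. rewrite U0_hi by (auto; lra). rewrite (bmpR al be t) by lra. rewrite Hu2 by lra. ring.
    + intros t Ht. unfold Uf. eapply Rle_trans; [apply Rabs_triang|].
      pose proof (U0_abs W z (nuf e) e s t Hz). rewrite Rabs_mult. pose proof (bmp_bnd al be t ltac:(lra)).
      rewrite (Rabs_right (bmp al be t)) by lra. fold Bb in H0.
      assert (Rabs (lamf e) * bmp al be t <= Rabs (lamf e) * Bb) by (apply Rmult_le_compat_l; [apply Rabs_pos| lra]).
      lra.
    + exists (RInt (fun t => u t * y t) c d).
      destruct (ex_uy u y c d s z ltac:(lra) Hy Hu1 Hu2) as [Eu _].
      assert (EU0 : ex_RInt (fun t => U0 W z (nuf e) e s t * y t) c d).
      { apply ex_contc; [lra|]. intros. apply cR_mult; [apply U0_cont; auto| apply Hy; auto]. }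
      assert (Mass : @eq R (RInt (fun t => Uf W z (nuf e) e s al be (lamf e) t * y t) c d) (RInt (fun t => u t * y t) c d)).
      { rewrite (RInt_extR _ (fun t => U0 W z (nuf e) e s t * y t + lamf e * (bmp al be t * y t))) by (intros; unfold Uf; ring).
        rewrite RInt_add by (auto; apply ex_mulc; auto). rewrite RInt_mulc by auto. fold B.
        unfold lamf. cbv beta. field. lra. }
      split; [|apply Lint_of; auto; lra].
      rewrite <- Mass. apply Lint_of; [lra|].
      apply ex_contc; [lra|]. intros. apply cR_mult; [apply Uf_cont; auto| apply Hy; auto].
  - intros eta Heta. set (K1 := 4 + Kl * Bb * (be - al)).
    assert (HK1 : 0 < K1) by (unfold K1; pose proof (Rmult_lt_0_compat _ _ (Rmult_lt_0_compat _ _ HKl HBb) (ltac:(lra) : 0 < be - al)); lra).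
    assert (Hd0 : 0 < eta / (K1 + 1)) by (apply Rdiv_lt_0_compat; lra).
    exists ((eta / (K1 + 1)) ^ 4). split; [apply pow_lt; lra|].
    intros e He1 He2.
    destruct (nu_facts e (eta / (K1 + 1)) Hd0 He1) as (_ & W2 & _). fold (nuf e) in W2.
    destruct (PE e (conj (proj1 He1) He2)) as (V1 & V2 & V3 & Q1 & Q2 & Q3 & Q4).
    destruct (L1_bnd W z (nuf e) e s al be (lamf e) c d u HW V1 ltac:(lra) Hz ltac:(lra) ltac:(lra) ltac:(lra) ltac:(lra) Hu1 Hu2) as [E1 E2].
    exists (RInt (fun t => Rabs (Uf W z (nuf e) e s al be (lamf e) t - u t)) c d). split; [apply Lint_of; auto; lra|].
    eapply Rle_lt_trans; [exact E2|]. fold Bb.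
    assert (H3 : nuf e ^ 3 <= nuf e) by (apply pow_le_self; [lra| lia]).
    assert (X : Rabs (lamf e) * Bb * (be - al) <= Kl * nuf e * Bb * (be - al)).
    { apply Rmult_le_compat_r; [lra|]. apply Rmult_le_compat_r; [lra|]. eapply Rle_trans; [exact Q4|]. apply Rmult_le_compat_l; lra. }
    assert (Y : 2 * (Tq (Wzf W z) (nuf e) e s 1 - Tq (Wzf W z) (nuf e) e s (-1)) <= 4 * nuf e) by lra.
    assert (Z : nuf e * K1 < eta).
    { apply Rlt_le_trans with (eta / (K1 + 1) * K1).
      - apply Rmult_lt_compat_r; lra.
      - unfold Rdiv. rewrite Rmult_assoc. rewrite <- (Rmult_1_r eta) at 2. apply Rmult_le_compat_l; [lra|].
        apply Rmult_le_reg_l with (K1 + 1); [lra|]. rewrite <- Rmult_assoc, Rinv_r by lra. lra. }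
    unfold K1 in Z. nra.
  - intros eta Heta.
    set (Bd := 2 * ((be - al) ^ 2 / 4) * (be - al)).
    set (Kex := 4 * y s + L * sigma + 4 * L + Ymax * (be - al) * (Kl ^ 2 * Bd ^ 2 + K2 * Kl ^ 2 * Bb ^ 2)).
    assert (Hys : 0 < y s) by (apply Hyp; lra).
    assert (HKex : 0 <= Kex).
    { unfold Kex. assert (0 <= L * sigma) by (apply Rmult_le_pos; auto).
      assert (0 <= Ymax * (be - al) * (Kl ^ 2 * Bd ^ 2 + K2 * Kl ^ 2 * Bb ^ 2)).
      { apply Rmult_le_pos; [apply Rmult_le_pos; lra|]. apply Rplus_le_le_0_compat.
        - apply Rmult_le_pos; apply pow2_ge_0.
        - apply Rmult_le_pos; [apply Rmult_le_pos; [auto| apply pow2_ge_0]| apply pow2_ge_0]. }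
      lra. }
    assert (Hd0 : 0 < eta / (8 * Kex + 1)) by (apply Rdiv_lt_0_compat; lra).
    exists ((eta / (8 * Kex + 1)) ^ 4). split; [apply pow_lt; lra|].
    intros e He1 He2.
    destruct (nu_facts e (eta / (8 * Kex + 1)) Hd0 He1) as (_ & W2 & _). fold (nuf e) in W2.
    destruct (PE e (conj (proj1 He1) He2)) as (V1 & V2 & V3 & Q1 & Q2 & Q3 & Q4).
    pose proof (LB e (conj (proj1 He1) He2)) as LBe.
    assert (Hlam : Rabs (lamf e) * ((be - al) ^ 2 / 4) ^ 2 <= rho) by (fold Bb; lra).
    destruct (E_bnd W z (nuf e) e s al be (lamf e) c d sigma y Ymax L rho K2 HW V1 ltac:(lra) Hz Hsig
       ltac:(lra) ltac:(lra) ltac:(lra) ltac:(lra) Hy Hyb HL Hlip HK2 Htay Hlam) as [E1 E2].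
    exists (RInt (fun t => (e * Gf W z (nuf e) e s al be (lamf e) t ^ 2 + W (Uf W z (nuf e) e s al be (lamf e) t) / e) * y t) c d).
    split; [apply Lint_of; auto; lra|].
    fold Bb Bd in E2.
    set (I := RInt (fun t => (e * Gf W z (nuf e) e s al be (lamf e) t ^ 2 + W (Uf W z (nuf e) e s al be (lamf e) t) / e) * y t) c d) in *.
    clearbody I.
    set (v := nuf e) in *. set (lam := lamf e) in *.
    clearbody v lam.
    subst e.
    assert (Hv1 : v <= 1) by lra.
    assert (P3 : v ^ 3 <= v) by (apply pow_le_self; [lra| lia]).
    assert (P4 : v ^ 4 <= v) by (apply pow_le_self; [lra| lia]).
    assert (Ev : v ^ 4 / v = v ^ 3) by (field; lra).
    rewrite Ev in E2.
    assert (Hl2 : lam ^ 2 <= Kl ^ 2 * v ^ 6).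
    { rewrite <- (pow2_abs lam). replace (Kl ^ 2 * v ^ 6) with ((Kl * v ^ 3) ^ 2) by ring.
      apply pow_incr. split; [apply Rabs_pos| auto]. }
    assert (T1 : (y s + L * v ^ 3) * (sigma + 4 * v) <= y s * sigma + v * (4 * y s + L * sigma + 4 * L)).
    { assert (L * v ^ 3 * sigma <= L * v * sigma) by (apply Rmult_le_compat_r; auto; apply Rmult_le_compat_l; auto).
      assert (L * v ^ 3 * v <= L * v) by (replace (L * v ^ 3 * v) with (L * v ^ 4) by ring; apply Rmult_le_compat_l; auto).
      nra. }
    assert (T2a : v ^ 4 * lam ^ 2 * Bd ^ 2 <= Kl ^ 2 * Bd ^ 2 * v).
    { apply Rle_trans with (v ^ 4 * (Kl ^ 2 * v ^ 6) * Bd ^ 2).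
      - apply Rmult_le_compat_r; [apply pow2_ge_0|]. apply Rmult_le_compat_l; [apply pow_le; lra| auto].
      - replace (v ^ 4 * (Kl ^ 2 * v ^ 6) * Bd ^ 2) with (Kl ^ 2 * Bd ^ 2 * v ^ 10) by ring.
        apply Rmult_le_compat_l; [apply Rmult_le_pos; apply pow2_ge_0|]. apply pow_le_self; [lra| lia]. }
    assert (T2b : K2 * (lam * Bb) ^ 2 / v ^ 4 <= K2 * Kl ^ 2 * Bb ^ 2 * v).
    { replace (K2 * (lam * Bb) ^ 2 / v ^ 4) with (K2 * Bb ^ 2 * (lam ^ 2 / v ^ 4)) by (field; lra).
      replace (K2 * Kl ^ 2 * Bb ^ 2 * v) with (K2 * Bb ^ 2 * (Kl ^ 2 * v)) by ring.
      apply Rmult_le_compat_l; [apply Rmult_le_pos; [auto| apply pow2_ge_0]|].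
      assert (Hv4 : 0 < v ^ 4) by (apply pow_lt; lra).
      apply Rmult_le_reg_r with (v ^ 4); auto. unfold Rdiv. rewrite Rmult_assoc, Rinv_l, Rmult_1_r by lra.
      apply Rle_trans with (1 := Hl2).
      replace (Kl ^ 2 * v * v ^ 4) with (Kl ^ 2 * v ^ 5) by ring.
      apply Rmult_le_compat_l; [apply pow2_ge_0|]. replace (v ^ 6) with (v ^ 5 * v) by ring.
      assert (0 <= v ^ 5) by (apply pow_le; lra). nra. }
    assert (T2 : Ymax * (v ^ 4 * lam ^ 2 * Bd ^ 2 + K2 * (lam * Bb) ^ 2 / v ^ 4) * (be - al) <=
                 v * (Ymax * (be - al) * (Kl ^ 2 * Bd ^ 2 + K2 * Kl ^ 2 * Bb ^ 2))).
    { replace (v * (Ymax * (be - al) * (Kl ^ 2 * Bd ^ 2 + K2 * Kl ^ 2 * Bb ^ 2))) with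
        (Ymax * (Kl ^ 2 * Bd ^ 2 * v + K2 * Kl ^ 2 * Bb ^ 2 * v) * (be - al)) by ring.
      apply Rmult_le_compat_r; [lra|]. apply Rmult_le_compat_l; lra. }
    assert (EI : I <= y s * sigma + v * Kex) by (unfold Kex; lra).
    assert (Hvk : v * (8 * Kex + 1) < eta).
    { apply Rlt_le_trans with (eta / (8 * Kex + 1) * (8 * Kex + 1)).
      - apply Rmult_lt_compat_r; lra.
      - right. field. lra. }
    pose proof PI_4. pose proof PI_RGT_0.
    assert (0 <= v * Kex) by (apply Rmult_le_pos; lra).
    assert (2 * PI * (v * Kex) <= 8 * (v * Kex)) by nra.
    assert (2 * PI * I <= 2 * PI * (y s * sigma + v * Kex)) by (apply Rmult_le_compat_l; lra).
    nra.
Qed.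

Theorem mainTheorem8 (A0 m C0 : R) (W : R -> R) (sigma : R)
  (a0 b0 : R) (x y u : R -> R) (c d s : R) :
  0 < A0 -> 1 < C0 -> W_ok W ->
  Lint (fun r => sqrt (W r)) (-1) 1 (sigma / 2) ->
  a0 < b0 ->
  in_C A0 a0 b0 x y 1 ->
  in_P A0 m a0 b0 y 1 u ->
  (exists L : list R, forall t, jump_set a0 b0 y u t -> In t L) ->
  jump_set a0 b0 y u s ->
  a0 < c -> c < d -> d < b0 -> (forall t, c <= t <= d -> 0 < y t) ->
  c <= s <= d ->
  (forall t, c <= t <= d -> jump_set a0 b0 y u t -> t = s) ->
  exists eps0, 0 < eps0 /\ exists U G : R -> R -> R,
    (forall e, 0 < e < eps0 ->
       W12 c d (U e) (G e) /\
       (exists c' d', c < c' /\ c' <= d' /\ d' < d /\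
          forall t, c < t < d -> (t < c' \/ d' < t) -> U e t = u t) /\
       (forall t, c < t < d -> Rabs (U e t) <= C0) /\
       (exists I, Lint (fun t => U e t * y t) c d I /\
                  Lint (fun t => u t * y t) c d I)) /\
    (forall eta, 0 < eta -> exists del, 0 < del /\ forall e, 0 < e < del -> e < eps0 ->
       exists I, Lint (fun t => Rabs (U e t - u t)) c d I /\ I < eta) /\
    (forall eta, 0 < eta -> exists del, 0 < del /\ forall e, 0 < e < del -> e < eps0 ->
       exists E, Lint (fun t => (e * G e t ^ 2 + W (U e t) / e) * y t) c d E /\
                 2 * PI * E <= 2 * PI * sigma * y s + eta).
Proof.
  intros HA0 HC0 HW HL Hab HC HP Hfin Hjs Hac Hcd Hdb Hyp Hs Hj.
  change (Concl C0 W sigma y u c d s).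
  destruct (y_lip A0 a0 b0 x y 1 HC) as [L [HL0 Hlip]].
  assert (Hy : forall t, c <= t <= d -> continuous y t).
  { intros t Ht. apply (y_cont y a0 b0 L t HL0 Hlip). lra. }
  assert (Hyc : forall t, c <= t <= d -> continuity_pt y t) by (intros; apply cR_to_pt; auto).
  destruct (continuity_ab_maj y c d ltac:(lra) Hyc) as [mx [Hmx Hmx2]].
  assert (Hlip' : forall t, c <= t <= d -> y t <= y s + L * Rabs (t - s)).
  { intros t Ht. pose proof (Hlip t s ltac:(lra) ltac:(lra)). apply Rabs_le_inv in H. lra. }
  pose proof (sigma_rel W sigma 1 HW HL (or_introl eq_refl)) as S1.
  assert (Hsig0 : 0 <= sigma).
  { assert (0 <= RInt (fun r => sqrt (W (1 * r))) (-1) 1).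
    { apply RInt_nonneg; [lra| apply ex_contc; [lra| intros; apply sqrtW_cont; auto]|]. intros; apply sqrt_pos. }
    lra. }
  assert (Hu : forall t, a0 < t < b0 -> u t = 1 \/ u t = -1) by (destruct HP as (H & _); auto).
  assert (Hys : 0 < y s) by (apply Hyp; lra).
  assert (Usame : forall t1 t2, c <= t1 <= d -> c <= t2 <= d -> (t1 < s /\ t2 < s \/ s < t1 /\ s < t2) -> u t1 = u t2).
  { intros t1 t2 H1 H2 H3. destruct (Rle_dec t1 t2).
    - apply (u_side A0 m a0 b0 y u c d s t1 t2 HP); auto; lra.
    - symmetry. apply (u_side A0 m a0 b0 y u c d s t2 t1 HP); auto; lra. }
  destruct (Req_dec s c) as [Esc|Nsc].
  { set (m0 := (c + d) / 2). apply (const_case C0 W sigma y u c d s (u m0) m0); auto; try (unfold m0; lra).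
    - apply Hu. unfold m0; lra.
    - apply W_wells; auto. apply Hu. unfold m0; lra.
    - intros t Ht Hn. apply Usame; unfold m0; lra. }
  destruct (Req_dec s d) as [Esd|Nsd].
  { set (m0 := (c + d) / 2). apply (const_case C0 W sigma y u c d s (u m0) m0); auto; try (unfold m0; lra).
    - apply Hu. unfold m0; lra.
    - apply W_wells; auto. apply Hu. unfold m0; lra.
    - intros t Ht Hn. apply Usame; unfold m0; lra. }
  set (zL := u ((c + s) / 2)). set (zR := u ((s + d) / 2)).
  assert (HzL : zL = 1 \/ zL = -1) by (apply Hu; lra).
  assert (HzR : zR = 1 \/ zR = -1) by (apply Hu; lra).
  assert (UL : forall t, c < t < s -> u t = zL) by (intros; unfold zL; apply Usame; lra).
  assert (UR : forall t, s < t < d -> u t = zR) by (intros; unfold zR; apply Usame; lra).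
  destruct (Req_dec zL zR) as [Ez|Nz].
  - apply (const_case C0 W sigma y u c d s zR s); auto; try lra.
    + apply W_wells; auto.
    + intros t Ht Hn. destruct (Rlt_dec t s); [rewrite <- Ez; apply UL; lra| apply UR; lra].
  - assert (UL' : forall t, c < t < s -> u t = - zR).
    { intros t Ht. rewrite UL by auto. destruct HzL as [A|A], HzR as [B|B]; rewrite A, B in *; lra. }
    exact (main_case C0 W sigma y u c d s zR L (y mx) HC0 HW HzR (sigma_rel W sigma zR HW HL HzR) Hsig0
      ltac:(lra) Hy Hyp (fun t Ht => Hmx t Ht) HL0 Hlip' UL' UR).
Qed.
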